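(* Let $m_1,m_2,m_3>0$, let $\alpha_{ij},\beta_{ij}>0$ for $1\le i<j\le 3$, and let $a,b\in\mathbb{R}$ with $4<a<b-1$. Consider the Hamiltonian system $\dot{\mathbf q}=M^{-1}\mathbf p$, $\dot{\mathbf p}=-\nabla W(\mathbf q)$ on $(\mathbb{R}^3\setminus\Delta)\times\mathbb{R}^3$. Then no solution of this system has a singularity. That is, if $(\mathbf q(t),\mathbf p(t))$ is a solution with initial data in $(\mathbb{R}^3\setminus\Delta)\times\mathbb{R}^3$, defined on a maximal interval $[0,t^* )$, then $t^*=\infty$. In particular, no double or triple collisions occur in finite time. The analogous statement holds for backward time.
   Context: Three point masses $m_1,m_2,m_3$ move on a line with positions $\mathbf q=(q_1,q_2,q_3)$ and momenta $\mathbf p=(p_1,p_2,p_3)$. Let $M=\mathrm{diag}(m_1,m_2,m_3)$. The Hamiltonian is $H(\mathbf q,\mathbf p)=\tfrac12\mathbf p^TM^{-1}\mathbf p+W(\mathbf q)$, where $W=-U+V$ with $$U(\mathbf q)=\sum_{1\le i<j\le3}\frac{\alpha_{ij}}{|q_i-q_j|^{a}},\qquad V(\mathbf q)=\sum_{1\le i<j\le3}\frac{\beta_{ij}}{|q_i-q_j|^{b}}.$$ The collision set is $\Delta=\{\mathbf q\in\mathbb{R}^3: q_1=q_2\text{ or }q_2=q_3\text{ or }q_1=q_3\}$. *)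

(* Defs.v *)
From Stdlib Require Import Reals.
Open Scope R_scope.

Definition pairpot (c12 c13 c23 e : R) (x1 x2 x3 : R) : R :=
  c12 / Rpower (Rabs (x1 - x2)) e
  + c13 / Rpower (Rabs (x1 - x3)) e
  + c23 / Rpower (Rabs (x2 - x3)) e.

Definition Upot (al12 al13 al23 a : R) (x1 x2 x3 : R) : R :=
  pairpot al12 al13 al23 a x1 x2 x3.

Definition Vpot (be12 be13 be23 b : R) (x1 x2 x3 : R) : R :=
  pairpot be12 be13 be23 b x1 x2 x3.

Definition Wpot (al12 al13 al23 a be12 be13 be23 b : R) (x1 x2 x3 : R) : R :=
  - Upot al12 al13 al23 a x1 x2 x3 + Vpot be12 be13 be23 b x1 x2 x3.

Definition noncollision (x1 x2 x3 : R) : Prop :=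
  x1 <> x2 /\ x2 <> x3 /\ x1 <> x3.

(* (q,p) = (q1,q2,q3,p1,p2,p3) solves  q' = M^{-1} p,  p' = - grad W(q)
   on the open time interval (t0,t1), staying in (R^3 \ Delta) x R^3.
   The gradient is expressed through the partial derivatives of W. *)
Definition is_solution (m1 m2 m3 : R) (W : R -> R -> R -> R)
  (q1 q2 q3 p1 p2 p3 : R -> R) (t0 t1 : R) : Prop :=
  forall t, t0 < t < t1 ->
    noncollision (q1 t) (q2 t) (q3 t) /\
    derivable_pt_lim q1 t (p1 t / m1) /\
    derivable_pt_lim q2 t (p2 t / m2) /\
    derivable_pt_lim q3 t (p3 t / m3) /\
    (exists v, derivable_pt_lim p1 t v /\
       derivable_pt_lim (fun x => W x (q2 t) (q3 t)) (q1 t) (- v)) /\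
    (exists v, derivable_pt_lim p2 t v /\
       derivable_pt_lim (fun x => W (q1 t) x (q3 t)) (q2 t) (- v)) /\
    (exists v, derivable_pt_lim p3 t v /\
       derivable_pt_lim (fun x => W (q1 t) (q2 t) x) (q3 t) (- v)).

Definition agree_on (q1 q2 q3 p1 p2 p3 q1' q2' q3' p1' p2' p3' : R -> R)
  (t0 t1 : R) : Prop :=
  forall t, t0 < t < t1 ->
    q1' t = q1 t /\ q2' t = q2 t /\ q3' t = q3 t /\
    p1' t = p1 t /\ p2' t = p2 t /\ p3' t = p3 t.

(* Main.v *)
Require Import Defs.
From Stdlib Require Import Reals.
Open Scope R_scope.
From Stdlib Require Import Reals Lra Lia Psatz ClassicalEpsilon.
Open Scope R_scope.

Lemma bound_deriv f f' a b K : a <= b ->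
  (forall c, a <= c <= b -> derivable_pt_lim f c (f' c)) ->
  (forall c, a <= c <= b -> Rabs (f' c) <= K) ->
  Rabs (f b - f a) <= K * (b - a).
Proof.
  intros Hab Hd HK.
  assert (HK0 : 0 <= K) by (pose proof (HK a ltac:(lra)); pose proof (Rabs_pos (f' a)); lra).
  destruct (Req_dec a b) as [<-|Hne].
  - replace (f a - f a) with 0 by ring. rewrite Rabs_R0. nra.
  - destruct (MVT_cor2 f f' a b) as [c [Hc1 Hc2]]; try lra; auto.
    rewrite Hc1, Rabs_mult, (Rabs_right (b-a)) by lra.
    apply Rmult_le_compat_r; [lra| apply HK; lra].
Qed.

Lemma bound_deriv2 f f' a b x y K : a <= x <= b -> a <= y <= b ->
  (forall c, a <= c <= b -> derivable_pt_lim f c (f' c)) ->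
  (forall c, a <= c <= b -> Rabs (f' c) <= K) ->
  Rabs (f y - f x) <= K * Rabs (y - x).
Proof.
  intros Hx Hy Hd HK.
  destruct (Rle_dec x y).
  - rewrite (Rabs_right (y - x)) by lra. apply (bound_deriv f f'); auto.
    + intros; apply Hd; lra.
    + intros; apply HK; lra.
  - rewrite Rabs_minus_sym, (Rabs_minus_sym y x), (Rabs_right (x - y)) by lra.
    apply (bound_deriv f f'); [lra| |]; intros; [apply Hd|apply HK]; lra.
Qed.

Lemma dlim_loc f g x l d : 0 < d -> (forall y, Rabs (y - x) < d -> f y = g y) ->
  derivable_pt_lim f x l -> derivable_pt_lim g x l.
Proof.
  intros Hd Heq Hf eps Heps. destruct (Hf eps Heps) as [del Hdel].
  assert (Hp : 0 < Rmin del d) by (apply Rmin_pos; [apply cond_pos|lra]).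
  exists (mkposreal _ Hp). intros h Hh0 Hh. simpl in Hh.
  rewrite <- !Heq.
  - apply Hdel; auto. eapply Rlt_le_trans; [apply Hh|apply Rmin_l].
  - replace (x - x) with 0 by ring. rewrite Rabs_R0; lra.
  - replace (x + h - x) with h by ring. eapply Rlt_le_trans; [apply Hh|apply Rmin_r].
Qed.

Lemma dlim_ext f g x l : (forall y, f y = g y) ->
  derivable_pt_lim f x l -> derivable_pt_lim g x l.
Proof. intros H; apply (dlim_loc f g x l 1); auto; lra. Qed.

Lemma dlim_affine f x l a b : derivable_pt_lim f x l ->
  derivable_pt_lim (fun s => a + (f s - b)) x l.
Proof.
  intros Hf eps Heps. destruct (Hf eps Heps) as [del Hdel]. exists del.
  intros h Hh0 Hh. replace ((a + (f (x + h) - b) - (a + (f x - b))) / h) with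
    ((f (x + h) - f x) / h) by (field; auto). auto.
Qed.

Lemma dlim_shift f x c l : derivable_pt_lim f (x - c) l ->
  derivable_pt_lim (fun y => f (y - c)) x l.
Proof.
  intros Hf eps Heps. destruct (Hf eps Heps) as [del Hdel]. exists del.
  intros h Hh0 Hh. replace (x + h - c) with (x - c + h) by ring. auto.
Qed.

Lemma dlim_shift2 f x c l : derivable_pt_lim f (c - x) l ->
  derivable_pt_lim (fun y => f (c - y)) x (- l).
Proof.
  intros Hf eps Heps. destruct (Hf eps Heps) as [del Hdel]. exists del.
  intros h Hh0 Hh.
  assert (Hn : - h <> 0) by lra.
  assert (Ha : Rabs (-h) < del) by (rewrite Rabs_Ropp; auto).
  specialize (Hdel (-h) Hn Ha).
  replace (c - (x + h)) with (c - x + - h) by ring.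
  replace ((f (c - x + - h) - f (c - x)) / h - - l) with
     (- ((f (c - x + - h) - f (c - x)) / - h - l)) by (field; auto).
  rewrite Rabs_Ropp; auto.
Qed.

Lemma dlim_rev f x l : derivable_pt_lim f (- x) l ->
  derivable_pt_lim (fun s => f (- s)) x (- l).
Proof.
  intros H. apply (dlim_ext (fun y => f (0 - y))). { intros; f_equal; ring. }
  apply dlim_shift2. replace (0 - x) with (-x) by ring; auto.
Qed.

Lemma dlim_rev2 f x l : derivable_pt_lim f (- x) l ->
  derivable_pt_lim (fun s => - f (- s)) x l.
Proof.
  intros H. pose proof (dlim_rev f x l H) as H2.
  intros eps Heps. destruct (H2 eps Heps) as [del Hdel]. exists del.
  intros h Hh0 Hh. specialize (Hdel h Hh0 Hh).
  replace ((- f (- (x + h)) - - f (- x)) / h - l) with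
    (- ((f (- (x + h)) - f (- x)) / h - - l)) by (field; auto).
  rewrite Rabs_Ropp; auto.
Qed.

Lemma cont_eps f x : continuity_pt f x -> forall eps, 0 < eps ->
  exists del, 0 < del /\ forall y, Rabs (y - x) < del -> Rabs (f y - f x) < eps.
Proof.
  intros Hc eps Heps. destruct (Hc eps Heps) as [del [Hd H]]. exists del; split; auto.
  intros y Hy. destruct (Req_dec y x) as [->|Hne].
  - replace (f x - f x) with 0 by ring; rewrite Rabs_R0; auto.
  - apply (H y). split. { split; [exact I| auto]. } exact Hy.
Qed.

Lemma eps_cont f x : (forall eps, 0 < eps ->
  exists del, 0 < del /\ forall y, Rabs (y - x) < del -> Rabs (f y - f x) < eps) ->
  continuity_pt f x.
Proof.
  intros H eps Heps. destruct (H eps Heps) as [del [Hd Hy]]. exists del; split; auto.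
  intros y [_ Hy2]. apply Hy. exact Hy2.
Qed.

Lemma dlim_cont f x l : derivable_pt_lim f x l -> continuity_pt f x.
Proof. intros H. apply derivable_continuous_pt. exists l; exact H. Qed.

Definition lim_of (u : nat -> R) : R :=
  match excluded_middle_informative (exists l, Un_cv u l) with
  | left H => proj1_sig (constructive_indefinite_description _ H)
  | right _ => 0 end.

Lemma lim_of_spec u : (exists l, Un_cv u l) -> Un_cv u (lim_of u).
Proof.
  intros H. unfold lim_of. destruct excluded_middle_informative as [H'|H'].
  - destruct constructive_indefinite_description; simpl; auto.
  - contradiction.
Qed.

Definition Prim (g : R -> R) (a b : R) : R -> R :=
  match excluded_middle_informative (a <= b /\ forall x, a <= x <= b -> continuity_pt g x) with
  | left H => proj1_sig (@RiemannInt_P30 g a b (proj1 H) (proj2 H))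
  | right _ => fun _ => 0 end.

Lemma Prim_spec g a b : a <= b -> (forall x, a <= x <= b -> continuity_pt g x) ->
  forall x, a <= x <= b -> derivable_pt_lim (Prim g a b) x (g x).
Proof.
  intros Hab Hc x Hx. unfold Prim. destruct excluded_middle_informative as [H|H].
  - destruct (@RiemannInt_P30 g a b _ _) as [G HG0]. simpl. destruct HG0 as [HG _].
    destruct (HG x Hx) as [pr Hpr]. rewrite Hpr. unfold derive_pt. destruct pr as [l Hl]. simpl. exact Hl.
  - exfalso; auto.
Qed.

Lemma lim_bd u l k a B : Un_cv u l -> (forall m, (k <= m)%nat -> Rabs (u m - a) <= B) ->
  Rabs (l - a) <= B.
Proof.
  intros Hu Hb. destruct (Rle_dec (Rabs (l - a)) B) as [|Hn]; auto. exfalso.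
  destruct (Hu (Rabs (l - a) - B)) as [N HN]; [lra|].
  specialize (HN (Nat.max N k) ltac:(lia)). specialize (Hb (Nat.max N k) ltac:(lia)).
  unfold R_dist in HN.
  pose proof (Rabs_triang (l - u (Nat.max N k)) (u (Nat.max N k) - a)).
  replace (l - u (Nat.max N k) + (u (Nat.max N k) - a)) with (l - a) in H by ring.
  rewrite Rabs_minus_sym in HN. lra.
Qed.

Lemma geom_zero x C : (forall k, Rabs x <= C * (/2)^k) -> x = 0.
Proof.
  intros H. destruct (Req_dec x 0) as [|Hn]; auto. exfalso.
  assert (Hx : 0 < Rabs x) by (apply Rabs_pos_lt; auto).
  assert (HC : 0 < C).
  { specialize (H O). simpl in H. lra. }
  destruct (pow_lt_1_zero (/2) ltac:(rewrite Rabs_right; lra) (Rabs x / C)) as [N HN].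
  { apply Rdiv_lt_0_compat; lra. }
  specialize (HN N (le_n N)). specialize (H N).
  rewrite Rabs_right in HN by (apply Rle_ge, pow_le; lra).
  assert (C * (/2)^N < C * (Rabs x / C)) by (apply Rmult_lt_compat_l; auto).
  replace (C * (Rabs x / C)) with (Rabs x) in H0 by (field; lra). lra.
Qed.
Definition tc (c h t : R) := Rmax (c - h) (Rmin (c + h) t).

Lemma tc_in c h t : 0 <= h -> c - h <= tc c h t <= c + h.
Proof. intros; unfold tc, Rmax, Rmin; repeat destruct Rle_dec; lra. Qed.

Lemma tc_id c h t : c - h <= t <= c + h -> tc c h t = t.
Proof. intros; unfold tc, Rmax, Rmin; repeat destruct Rle_dec; lra. Qed.

Lemma tc_lip c h x y : 0 <= h -> Rabs (tc c h x - tc c h y) <= Rabs (x - y).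
Proof.
  intros; unfold tc, Rmax, Rmin; repeat destruct Rle_dec; unfold Rabs;
  repeat destruct Rcase_abs; lra.
Qed.

Lemma pow_half_mono N n : (N <= n)%nat -> (/2)^n <= (/2)^N.
Proof.
  intros H. replace n with (N + (n - N))%nat by lia. generalize (n - N)%nat. intros p.
  induction p.
  - rewrite Nat.add_0_r; lra.
  - rewrite Nat.add_succ_r. simpl. pose proof (pow_le (/2) (N + p)). lra.
Qed.

Lemma half_small C eps : 0 <= C -> 0 < eps -> exists N, forall n, (N <= n)%nat -> C * (/2)^n < eps.
Proof.
  intros HC He.
  destruct (pow_lt_1_zero (/2) ltac:(rewrite Rabs_right; lra) (eps / (C + 1))) as [N HN].
  { apply Rdiv_lt_0_compat; lra. }
  exists N. intros n Hn. specialize (HN n Hn).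
  rewrite Rabs_right in HN by (apply Rle_ge, pow_le; lra).
  pose proof (pow_le (/2) n ltac:(lra)).
  assert (C * (/2)^n <= (C+1) * (/2)^n) by nra.
  assert ((C + 1) * (/2)^n < (C+1) * (eps / (C+1))) by (apply Rmult_lt_compat_l; lra).
  replace ((C+1) * (eps / (C+1))) with eps in H1 by (field; lra). lra.
Qed.

Lemma fin_delta n (u : R -> nat -> R) t : (forall j, (j < n)%nat -> continuity_pt (fun s => u s j) t) ->
  forall eps, 0 < eps -> exists del, 0 < del /\ forall s, Rabs (s - t) < del -> forall j, (j < n)%nat -> Rabs (u s j - u t j) < eps.
Proof.
  induction n; intros Hc eps Heps.
  - exists 1; split; [lra|]; intros; lia.
  - destruct IHn with (eps := eps) as [d1 [Hd1 H1]]; [intros; apply Hc; lia| exact Heps|].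
    destruct (cont_eps _ _ (Hc n (Nat.lt_succ_diag_r n)) eps Heps) as [d2 [Hd2 H2]].
    exists (Rmin d1 d2); split; [apply Rmin_pos; auto|].
    intros s Hs j Hj. destruct (Nat.eq_dec j n) as [->|Hne].
    + apply H2. eapply Rlt_le_trans; [apply Hs| apply Rmin_r].
    + apply H1; [eapply Rlt_le_trans; [apply Hs| apply Rmin_l]| lia].
Qed.

Definition Lipsch n (G : (nat -> R) -> nat -> R) L :=
  forall u v B, (forall j, (j < n)%nat -> Rabs (u j - v j) <= B) ->
    forall i, (i < n)%nat -> Rabs (G u i - G v i) <= L * B.

Lemma cont_comp n G L (u : R -> nat -> R) t i : 0 <= L -> Lipsch n G L ->
  (forall j, (j < n)%nat -> continuity_pt (fun s => u s j) t) -> (i < n)%nat ->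
  continuity_pt (fun s => G (u s) i) t.
Proof.
  intros HL Hlip Hc Hi. apply eps_cont. intros eps Heps.
  destruct (fin_delta n u t Hc (eps / (L + 1))) as [del [Hd H]]. { apply Rdiv_lt_0_compat; lra. }
  exists del; split; auto. intros s Hs.
  eapply Rle_lt_trans. { apply (Hlip (u s) (u t) (eps/(L+1))); auto. intros j Hj; left; apply H; auto. }
  replace (L * (eps / (L + 1))) with (eps - eps/(L+1)) by (field; lra).
  assert (0 < eps / (L+1)) by (apply Rdiv_lt_0_compat; lra). lra.
Qed.

Fixpoint iter (G : (nat -> R) -> nat -> R) (y0 : nat -> R) (c h : R) (k : nat) : R -> nat -> R :=
  match k with
  | O => fun _ i => y0 i
  | S k => fun t i => y0 i + (Prim (fun s => G (iter G y0 c h k s) i) (c - h) (c + h) (tc c h t)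
                              - Prim (fun s => G (iter G y0 c h k s) i) (c - h) (c + h) c)
  end.

Lemma iter_cont n G L y0 c h : 0 <= h -> 0 <= L -> Lipsch n G L ->
  forall k i, (i < n)%nat -> forall t, continuity_pt (fun s => iter G y0 c h k s i) t.
Proof.
  intros Hh HL Hlip k. induction k; intros i Hi t.
  - apply eps_cont. intros eps Heps. exists 1. split; [lra|]. intros. simpl.
    replace (y0 i - y0 i) with 0 by ring. rewrite Rabs_R0; auto.
  - set (g := fun s => G (iter G y0 c h k s) i).
    assert (Hg : forall x, continuity_pt g x).
    { intros x. apply (cont_comp n G L); auto. }
    set (P := Prim g (c - h) (c + h)).
    assert (HP : forall x, c - h <= x <= c + h -> continuity_pt P x).
    { intros x Hx. apply (dlim_cont _ _ (g x)). apply Prim_spec; auto; lra. }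
    apply eps_cont. intros eps Heps.
    destruct (cont_eps P (tc c h t) (HP _ (tc_in c h t Hh)) eps Heps) as [del [Hd H]].
    exists del; split; auto. intros s Hs. cbn [iter]. fold g. fold P.
    replace (y0 i + (P (tc c h s) - P c) - (y0 i + (P (tc c h t) - P c))) with
      (P (tc c h s) - P (tc c h t)) by ring.
    apply H. eapply Rle_lt_trans; [apply tc_lip; auto| auto].
Qed.

Lemma iter_deriv n G L y0 c h : 0 <= h -> 0 <= L -> Lipsch n G L ->
  forall k i, (i < n)%nat -> forall t, c - h < t < c + h ->
  derivable_pt_lim (fun s => iter G y0 c h (S k) s i) t (G (iter G y0 c h k t) i).
Proof.
  intros Hh HL Hlip k i Hi t Ht.
  set (g := fun s => G (iter G y0 c h k s) i).
  assert (Hg : forall x, continuity_pt g x).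
  { intros x. apply (cont_comp n G L); auto. intros; apply (iter_cont n G L); auto. }
  set (P := Prim g (c - h) (c + h)).
  apply (dlim_loc (fun s => y0 i + (P s - P c)) _ _ _ (Rmin (t - (c - h)) (c + h - t))).
  { apply Rmin_pos; lra. }
  { intros y Hy. cbn [iter]. fold g. fold P. rewrite (tc_id c h y); auto.
    pose proof (Rmin_l (t - (c - h)) (c + h - t)). pose proof (Rmin_r (t - (c - h)) (c + h - t)).
    unfold Rabs in Hy; destruct Rcase_abs in Hy; lra. }
  apply dlim_affine. apply (Prim_spec g); auto; lra.
Qed.

Lemma iter_c G y0 c h : 0 <= h -> forall k i, iter G y0 c h k c i = y0 i.
Proof.
  intros Hh k i. destruct k; simpl; auto. rewrite tc_id by lra. ring.
Qed.

Lemma diff_bd n G M L y0 c h : 0 <= h -> 0 <= L -> 0 <= M -> L * h <= /2 -> Lipsch n G L ->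
  (forall u i, (i < n)%nat -> Rabs (G u i) <= M) ->
  forall k t i, (i < n)%nat -> Rabs (iter G y0 c h (S k) t i - iter G y0 c h k t i) <= M * h * (/2)^k.
Proof.
  intros Hh HL HM HLh Hlip Hbd k. induction k; intros t i Hi.
  - set (g := fun s => G (iter G y0 c h 0 s) i).
    assert (Hg : forall x, continuity_pt g x).
    { intros x. apply (cont_comp n G L); auto. intros; apply (iter_cont n G L); auto. }
    set (P := Prim g (c - h) (c + h)).
    change (Rabs (y0 i + (P (tc c h t) - P c) - y0 i) <= M * h * (/ 2) ^ 0).
    replace (y0 i + (P (tc c h t) - P c) - y0 i) with (P (tc c h t) - P c) by ring.
    eapply Rle_trans. apply (bound_deriv2 P g (c - h) (c + h) c (tc c h t) M); try lra.
    + apply tc_in; auto.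
    + intros; apply Prim_spec; auto; lra.
    + intros; apply Hbd; auto.
    + pose proof (tc_in c h t Hh). simpl.
      assert (Rabs (tc c h t - c) <= h) by (unfold Rabs; destruct Rcase_abs; lra). nra.
  - set (g1 := fun s => G (iter G y0 c h (S k) s) i).
    set (g0 := fun s => G (iter G y0 c h k s) i).
    assert (Hg1 : forall x, continuity_pt g1 x).
    { intros x. apply (cont_comp n G L); auto. intros; apply (iter_cont n G L); auto. }
    assert (Hg0 : forall x, continuity_pt g0 x).
    { intros x. apply (cont_comp n G L); auto. intros; apply (iter_cont n G L); auto. }
    set (P1 := Prim g1 (c - h) (c + h)).
    set (P0 := Prim g0 (c - h) (c + h)).
    change (Rabs (y0 i + (P1 (tc c h t) - P1 c) - (y0 i + (P0 (tc c h t) - P0 c))) <= M * h * (/ 2) ^ S k).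
    replace (y0 i + (P1 (tc c h t) - P1 c) - (y0 i + (P0 (tc c h t) - P0 c))) with
      ((fun x => P1 x - P0 x) (tc c h t) - (fun x => P1 x - P0 x) c) by (simpl; ring).
    eapply Rle_trans.
    apply (bound_deriv2 (fun x => P1 x - P0 x) (fun x => g1 x - g0 x) (c - h) (c + h) c (tc c h t)
             (L * (M * h * (/2)^k))); try lra.
    + apply tc_in; auto.
    + intros x Hx. apply derivable_pt_lim_minus; apply Prim_spec; auto; lra.
    + intros x Hx. unfold g1, g0. exact (Hlip _ _ _ (fun j Hj => IHk x j Hj) i Hi).
    + pose proof (tc_in c h t Hh). simpl.
      assert (Rabs (tc c h t - c) <= h) by (unfold Rabs; destruct Rcase_abs; lra).
      pose proof (pow_le (/2) k ltac:(lra)).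
      assert (0 <= M * h * (/2)^k) by (apply Rmult_le_pos; [apply Rmult_le_pos|]; lra).
      set (X := M * h * (/2)^k) in *.
      replace (M * h * (/ 2 * (/ 2) ^ k)) with (X / 2) by (unfold X; field).
      assert (L * X * Rabs (tc c h t - c) <= L * X * h) by (apply Rmult_le_compat_l; [apply Rmult_le_pos|]; lra).
      nra.
Qed.

Lemma cum_bd n G M L y0 c h : 0 <= h -> 0 <= L -> 0 <= M -> L * h <= /2 -> Lipsch n G L ->
  (forall u i, (i < n)%nat -> Rabs (G u i) <= M) ->
  forall p k t i, (i < n)%nat ->
  Rabs (iter G y0 c h (k + p) t i - iter G y0 c h k t i) <= 2 * M * h * (/2)^k - 2 * M * h * (/2)^(k + p).
Proof.
  intros Hh HL HM HLh Hlip Hbd p. induction p; intros k t i Hi.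
  - rewrite Nat.add_0_r. replace (iter G y0 c h k t i - iter G y0 c h k t i) with 0 by ring.
    rewrite Rabs_R0; lra.
  - rewrite Nat.add_succ_r.
    pose proof (diff_bd n G M L y0 c h Hh HL HM HLh Hlip Hbd (k + p) t i Hi).
    pose proof (IHp k t i Hi).
    pose proof (Rabs_triang (iter G y0 c h (S (k + p)) t i - iter G y0 c h (k + p) t i)
                            (iter G y0 c h (k + p) t i - iter G y0 c h k t i)).
    replace (iter G y0 c h (S (k + p)) t i - iter G y0 c h (k + p) t i +
             (iter G y0 c h (k + p) t i - iter G y0 c h k t i)) with
      (iter G y0 c h (S (k + p)) t i - iter G y0 c h k t i) in H1 by ring.
    simpl (( / 2) ^ S (k + p)). lra.
Qed.

Definition zlim G y0 c h (t : R) (i : nat) : R := lim_of (fun k => iter G y0 c h k t i).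

Lemma iter_to_z n G M L y0 c h : 0 <= h -> 0 <= L -> 0 <= M -> L * h <= /2 -> Lipsch n G L ->
  (forall u i, (i < n)%nat -> Rabs (G u i) <= M) ->
  forall k t i, (i < n)%nat -> Rabs (zlim G y0 c h t i - iter G y0 c h k t i) <= 2 * M * h * (/2)^k.
Proof.
  intros Hh HL HM HLh Hlip Hbd.
  assert (Hcum : forall k m t i, (i < n)%nat -> (k <= m)%nat ->
    Rabs (iter G y0 c h m t i - iter G y0 c h k t i) <= 2 * M * h * (/2)^k).
  { intros k m t i Hi Hkm. replace m with (k + (m - k))%nat by lia.
    pose proof (cum_bd n G M L y0 c h Hh HL HM HLh Hlip Hbd (m - k) k t i Hi).
    pose proof (pow_le (/2) (k + (m - k)) ltac:(lra)).
    assert (0 <= 2 * M * h * (/ 2) ^ (k + (m - k))) by (repeat apply Rmult_le_pos; lra). lra. }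
  intros k t i Hi.
  assert (Hc : Cauchy_crit (fun k => iter G y0 c h k t i)).
  { intros eps Heps. destruct (half_small (4 * M * h) eps) as [N HN]; auto.
    { repeat apply Rmult_le_pos; lra. }
    exists N. intros p q Hp Hq. unfold R_dist.
    pose proof (Hcum N p t i Hi Hp). pose proof (Hcum N q t i Hi Hq).
    pose proof (Rabs_triang (iter G y0 c h p t i - iter G y0 c h N t i)
                            (iter G y0 c h N t i - iter G y0 c h q t i)).
    replace (iter G y0 c h p t i - iter G y0 c h N t i + (iter G y0 c h N t i - iter G y0 c h q t i))
      with (iter G y0 c h p t i - iter G y0 c h q t i) in H1 by ring.
    rewrite (Rabs_minus_sym (iter G y0 c h N t i)) in H1.
    specialize (HN N (le_n N)). lra. }
  destruct (R_complete _ Hc) as [l Hl].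
  apply (lim_bd (fun k => iter G y0 c h k t i) _ k).
  - unfold zlim. apply lim_of_spec. exists l; auto.
  - intros m Hm. apply Hcum; auto.
Qed.

Theorem local_exist n G M L y0 c h : 0 < h -> 0 <= L -> 0 <= M -> L * h <= /2 -> Lipsch n G L ->
  (forall u i, (i < n)%nat -> Rabs (G u i) <= M) ->
  exists z : R -> nat -> R, (forall i, (i < n)%nat -> z c i = y0 i) /\
    forall t, c - h < t < c + h -> forall i, (i < n)%nat ->
      derivable_pt_lim (fun s => z s i) t (G (z t) i).
Proof.
  intros Hh HL HM HLh Hlip Hbd.
  assert (Hh' : 0 <= h) by lra.
  pose proof (iter_to_z n G M L y0 c h Hh' HL HM HLh Hlip Hbd) as Hz.
  exists (zlim G y0 c h). split.
  - intros i Hi.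
    assert (Rabs (zlim G y0 c h c i - y0 i) <= 0).
    { apply (lim_bd (fun k => iter G y0 c h k c i) _ O).
      - unfold zlim. apply lim_of_spec. exists (y0 i).
        intros eps Heps. exists O. intros m _. unfold R_dist. rewrite iter_c; auto.
        replace (y0 i - y0 i) with 0 by ring. rewrite Rabs_R0; auto.
      - intros m _. rewrite iter_c; auto. replace (y0 i - y0 i) with 0 by ring. rewrite Rabs_R0; lra. }
    pose proof (Rabs_pos (zlim G y0 c h c i - y0 i)).
    unfold Rabs in H; destruct Rcase_abs in H; lra.
  - intros t Ht i Hi.
    set (d := mkposreal h Hh).
    apply (CVU_derivable (fun k s => iter G y0 c h (S k) s i) (fun k s => G (iter G y0 c h k s) i)
            (fun s => zlim G y0 c h s i) (fun s => G (zlim G y0 c h s) i) c d).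
    + intros eps Heps. destruct (half_small (L * (2 * M * h)) eps) as [N HN]; auto.
      { repeat apply Rmult_le_pos; lra. }
      exists N. intros k y Hk Hy.
      eapply Rle_lt_trans. { apply (Hlip _ _ (2 * M * h * (/2)^k)); [intros j Hj; apply Hz; auto| exact Hi]. }
      specialize (HN k Hk). lra.
    + intros x Hx eps Heps. destruct (half_small (2 * M * h) eps) as [N HN]; auto.
      { repeat apply Rmult_le_pos; lra. }
      exists N. intros k Hk. unfold R_dist. rewrite Rabs_minus_sym.
      eapply Rle_lt_trans. apply Hz; auto.
      pose proof (pow_half_mono k (S k) ltac:(lia)).
      specialize (HN k ltac:(lia)).
      assert (0 <= 2 * M * h) by (repeat apply Rmult_le_pos; lra). nra.
    + intros k x Hx. apply (iter_deriv n G L); auto.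
      unfold Boule in Hx; simpl in Hx. unfold Rabs in Hx; destruct Rcase_abs in Hx; lra.
    + unfold Boule; simpl. unfold Rabs; destruct Rcase_abs; lra.
Qed.
Lemma dlim_lin f g x l1 l2 p q : derivable_pt_lim f x l1 -> derivable_pt_lim g x l2 ->
  derivable_pt_lim (fun y => p * f y + q * g y) x (p * l1 + q * l2).
Proof.
  intros H1 H2.
  exact (derivable_pt_lim_plus (mult_real_fct p f) (mult_real_fct q g) x _ _
           (derivable_pt_lim_scal f p x l1 H1) (derivable_pt_lim_scal g q x l2 H2)).
Qed.

Lemma dlim_add f g x l1 l2 : derivable_pt_lim f x l1 -> derivable_pt_lim g x l2 ->
  derivable_pt_lim (fun y => f y + g y) x (l1 + l2).
Proof. intros H1 H2. exact (derivable_pt_lim_plus f g x _ _ H1 H2). Qed.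

Lemma dlim_const c x : derivable_pt_lim (fun _ => c) x 0.
Proof. exact (derivable_pt_lim_const c x). Qed.

Lemma rp_pos x y : 0 < Rpower x y.
Proof. unfold Rpower; apply exp_pos. Qed.

Lemma exp_le_mono u v : u <= v -> exp u <= exp v.
Proof. intros [H|H]; [left; apply exp_increasing; auto| rewrite H; lra]. Qed.

Lemma rp_dec x y e : 0 < x <= y -> e <= 0 -> Rpower y e <= Rpower x e.
Proof.
  intros [Hx Hxy] He. unfold Rpower. apply exp_le_mono.
  assert (ln x <= ln y).
  { destruct Hxy as [Hlt|Heq]; [left; apply ln_increasing; auto| rewrite Heq; lra]. }
  nra.
Qed.

Lemma rp_dec_lt x y e : 0 < x < y -> e < 0 -> Rpower y e < Rpower x e.
Proof.
  intros [Hx Hxy] He. unfold Rpower. apply exp_increasing.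
  assert (ln x < ln y) by (apply ln_increasing; auto). nra.
Qed.

Definition psi (a b al be x : R) := - (al / Rpower (Rabs x) a) + be / Rpower (Rabs x) b.
Definition gg (a b al be r : R) := - al * Rpower r (- a) + be * Rpower r (- b).
Definition hh (a b al be r : R) := al * a * Rpower r (- a - 1) - be * b * Rpower r (- b - 1).
Definition sgn (x : R) := if Rle_dec 0 x then 1 else -1.
Definition dpsi a b al be x := hh a b al be (Rabs x) * sgn x.

Lemma psi_gg a b al be x : psi a b al be x = gg a b al be (Rabs x).
Proof. unfold psi, gg, Rdiv. rewrite !Rpower_Ropp. ring. Qed.

Lemma gg_deriv a b al be r : 0 < r -> derivable_pt_lim (gg a b al be) r (hh a b al be r).
Proof.
  intros Hr. unfold gg.
  apply (dlim_ext (fun y => (- al) * Rpower y (- a) + be * Rpower y (- b))). { intros; ring. }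
  replace (hh a b al be r) with ((- al) * ((- a) * Rpower r (- a - 1)) + be * ((- b) * Rpower r (- b - 1)))
    by (unfold hh; ring).
  apply dlim_lin; apply derivable_pt_lim_power; auto.
Qed.

Lemma dpsi_ok a b al be x : x <> 0 -> derivable_pt_lim (psi a b al be) x (dpsi a b al be x).
Proof.
  intros Hx.
  apply (dlim_ext (comp (gg a b al be) Rabs)). { intros y. unfold comp. rewrite psi_gg; auto. }
  unfold dpsi. apply derivable_pt_lim_comp.
  - unfold sgn. destruct (Rle_dec 0 x).
    + apply Rabs_derive_1. lra.
    + apply Rabs_derive_2. lra.
  - apply gg_deriv. apply Rabs_pos_lt; auto.
Qed.

Lemma dlim_psi_shift a b al be x c : x - c <> 0 ->
  derivable_pt_lim (fun y => psi a b al be (y - c)) x (dpsi a b al be (x - c)).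
Proof. intros H. apply dlim_shift. apply dpsi_ok; auto. Qed.

Lemma dlim_psi_shift2 a b al be x c : c - x <> 0 ->
  derivable_pt_lim (fun y => psi a b al be (c - y)) x (- dpsi a b al be (c - x)).
Proof. intros H. apply dlim_shift2. apply dpsi_ok; auto. Qed.

Lemma gg_small a b al be r : 0 < a < b -> 0 < al -> 0 < be ->
  0 < r <= Rmin 1 (Rpower (be / (2 * al)) (/ (b - a))) ->
  be / 2 * Rpower r (- b) <= gg a b al be r.
Proof.
  intros Hab Hal Hbe [Hr Hrd].
  set (d0 := Rmin 1 (Rpower (be / (2 * al)) (/ (b - a)))) in *.
  assert (Hd0 : 0 < d0) by (unfold d0; apply Rmin_pos; [lra| apply rp_pos]).
  assert (HS : 2 * al / be <= Rpower r (- (b - a))).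
  { eapply Rle_trans; [|apply (rp_dec r d0); lra].
    eapply Rle_trans; [|apply (rp_dec d0 (Rpower (be / (2 * al)) (/ (b - a)))); [split; [auto| apply Rmin_r]| lra]].
    rewrite Rpower_mult. replace (/ (b - a) * - (b - a)) with (Ropp 1) by (field; lra).
    rewrite Rpower_Ropp, Rpower_1. { right; field; lra. } apply Rdiv_lt_0_compat; lra. }
  unfold gg.
  assert (Hsplit : Rpower r (- b) = Rpower r (- a) * Rpower r (- (b - a))).
  { rewrite <- Rpower_plus. f_equal; ring. }
  rewrite Hsplit.
  pose proof (rp_pos r (- a)).
  assert (be * Rpower r (- (b - a)) >= 2 * al).
  { apply Rle_ge. replace (2 * al) with (be * (2 * al / be)) by (field; lra).
    apply Rmult_le_compat_l; lra. }
  nra.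
Qed.

Lemma psi_lower a b al be : 0 < a < b -> 0 < al -> 0 < be ->
  exists C, 0 <= C /\ forall x, x <> 0 -> - C <= psi a b al be x.
Proof.
  intros Hab Hal Hbe.
  set (d0 := Rmin 1 (Rpower (be / (2 * al)) (/ (b - a)))).
  assert (Hd0 : 0 < d0) by (unfold d0; apply Rmin_pos; [lra| apply rp_pos]).
  exists (al * Rpower d0 (- a)). split. { pose proof (rp_pos d0 (-a)). nra. }
  intros x Hx. rewrite psi_gg. set (r := Rabs x).
  assert (Hr : 0 < r) by (apply Rabs_pos_lt; auto).
  destruct (Rle_dec r d0).
  - pose proof (gg_small a b al be r Hab Hal Hbe ltac:(split; auto)).
    pose proof (rp_pos r (- b)). pose proof (rp_pos d0 (-a)). nra.
  - unfold gg. pose proof (rp_dec d0 r (-a) ltac:(lra) ltac:(lra)).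
    pose proof (rp_pos r (- b)). nra.
Qed.

Lemma psi_gap a b al be K : 0 < a < b -> 0 < al -> 0 < be ->
  exists del, 0 < del /\ forall x, x <> 0 -> psi a b al be x <= K -> del <= Rabs x.
Proof.
  intros Hab Hal Hbe.
  set (d0 := Rmin 1 (Rpower (be / (2 * al)) (/ (b - a)))).
  assert (Hd0 : 0 < d0) by (unfold d0; apply Rmin_pos; [lra| apply rp_pos]).
  set (K' := Rmax K 1).
  assert (HK' : 1 <= K' /\ K <= K') by (split; [apply Rmax_r| apply Rmax_l]).
  set (d1 := Rpower (2 * K' / be) (- / b)).
  exists (Rmin d0 d1). split. { apply Rmin_pos; auto. apply rp_pos. }
  intros x Hx HK. rewrite psi_gg in HK. set (r := Rabs x) in *.
  assert (Hr : 0 < r) by (apply Rabs_pos_lt; auto).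
  destruct (Rle_dec d0 r). { pose proof (Rmin_l d0 d1). lra. }
  destruct (Rle_dec d1 r). { pose proof (Rmin_r d0 d1). lra. }
  exfalso.
  pose proof (gg_small a b al be r Hab Hal Hbe ltac:(split; [auto| unfold d0 in n; lra])).
  assert (Hd1 : 0 < d1) by apply rp_pos.
  pose proof (rp_dec_lt r d1 (- b) ltac:(lra) ltac:(lra)).
  assert (Rpower d1 (- b) = 2 * K' / be).
  { unfold d1. rewrite Rpower_mult. replace (- / b * - b) with 1 by (field; lra).
    apply Rpower_1. apply Rdiv_lt_0_compat; lra. }
  rewrite H1 in H0.
  assert (be / 2 * (2 * K' / be) = K') by (field; lra).
  assert (be / 2 * (2 * K' / be) < be / 2 * Rpower r (- b)) by (apply Rmult_lt_compat_l; lra).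
  lra.
Qed.

Definition Hb a b al be r0 := al * a * Rpower r0 (- a - 1) + be * b * Rpower r0 (- b - 1).
Definition Kh a b al be r0 := al * a * (a + 1) * Rpower r0 (- a - 1 - 1) + be * b * (b + 1) * Rpower r0 (- b - 1 - 1).

Lemma hh_bd a b al be r0 r : 0 < a -> 0 < b -> 0 < al -> 0 < be -> 0 < r0 <= r ->
  Rabs (hh a b al be r) <= Hb a b al be r0.
Proof.
  intros Ha Hb0 Hal Hbe Hr. unfold hh, Hb.
  pose proof (rp_dec r0 r (- a - 1) Hr ltac:(lra)).
  pose proof (rp_dec r0 r (- b - 1) Hr ltac:(lra)).
  pose proof (rp_pos r (- a - 1)). pose proof (rp_pos r (- b - 1)).
  assert (0 < al * a) by nra. assert (0 < be * b) by nra.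
  unfold Rabs; destruct Rcase_abs; nra.
Qed.

Lemma hh_lip a b al be r0 r s : 0 < a -> 0 < b -> 0 < al -> 0 < be -> 0 < r0 -> r0 <= r -> r0 <= s ->
  Rabs (hh a b al be r - hh a b al be s) <= Kh a b al be r0 * Rabs (r - s).
Proof.
  intros Ha Hb0 Hal Hbe Hr0 Hr Hs.
  apply (bound_deriv2 (hh a b al be)
    (fun y => al * a * ((- a - 1) * Rpower y (- a - 1 - 1)) - be * b * ((- b - 1) * Rpower y (- b - 1 - 1)))
    r0 (Rmax r s)); try (split; [lra| first [apply Rmax_l| apply Rmax_r]]).
  - intros y Hy. unfold hh.
    apply (dlim_ext (fun z => (al * a) * Rpower z (- a - 1) + (- (be * b)) * Rpower z (- b - 1))).
    { intros; ring. }
    replace (al * a * ((- a - 1) * Rpower y (- a - 1 - 1)) - be * b * ((- b - 1) * Rpower y (- b - 1 - 1)))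
      with ((al * a) * ((- a - 1) * Rpower y (- a - 1 - 1)) + (- (be * b)) * ((- b - 1) * Rpower y (- b - 1 - 1)))
      by ring.
    apply dlim_lin; apply derivable_pt_lim_power; lra.
  - intros y Hy. unfold Kh.
    pose proof (rp_dec r0 y (- a - 1 - 1) ltac:(lra) ltac:(lra)).
    pose proof (rp_dec r0 y (- b - 1 - 1) ltac:(lra) ltac:(lra)).
    pose proof (rp_pos y (- a - 1 - 1)). pose proof (rp_pos y (- b - 1 - 1)).
    assert (0 < al * a * (a + 1)) by (apply Rmult_lt_0_compat; nra).
    assert (0 < be * b * (b + 1)) by (apply Rmult_lt_0_compat; nra).
    unfold Rabs; destruct Rcase_abs; nra.
Qed.

Lemma sgn_abs x : Rabs (sgn x) = 1.
Proof. unfold sgn; destruct Rle_dec; unfold Rabs; destruct Rcase_abs; lra. Qed.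

Lemma dpsi_bd a b al be r0 x : 0 < a -> 0 < b -> 0 < al -> 0 < be -> 0 < r0 -> r0 <= Rabs x ->
  Rabs (dpsi a b al be x) <= Hb a b al be r0.
Proof.
  intros. unfold dpsi. rewrite Rabs_mult, sgn_abs, Rmult_1_r. apply hh_bd; auto.
Qed.

Definition samesign r0 x y := (r0 <= x /\ r0 <= y) \/ (x <= - r0 /\ y <= - r0).

Lemma dpsi_lip a b al be r0 x y : 0 < a -> 0 < b -> 0 < al -> 0 < be -> 0 < r0 -> samesign r0 x y ->
  Rabs (dpsi a b al be x - dpsi a b al be y) <= Kh a b al be r0 * Rabs (x - y).
Proof.
  intros Ha Hb0 Hal Hbe Hr0 Hs. unfold dpsi.
  assert (Hsg : sgn x = sgn y /\ r0 <= Rabs x /\ r0 <= Rabs y).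
  { unfold sgn; destruct Hs as [[H1 H2]|[H1 H2]].
    - rewrite (Rabs_right x), (Rabs_right y) by lra. repeat destruct Rle_dec; repeat split; lra.
    - rewrite (Rabs_left x), (Rabs_left y) by lra. repeat destruct Rle_dec; repeat split; lra. }
  destruct Hsg as [Hsg [Hx Hy]]. rewrite Hsg.
  replace (hh a b al be (Rabs x) * sgn y - hh a b al be (Rabs y) * sgn y) with
    ((hh a b al be (Rabs x) - hh a b al be (Rabs y)) * sgn y) by ring.
  rewrite Rabs_mult, sgn_abs, Rmult_1_r.
  eapply Rle_trans. { apply (hh_lip a b al be r0); auto. }
  apply Rmult_le_compat_l. { unfold Kh. pose proof (rp_pos r0 (- a - 1 - 1)). pose proof (rp_pos r0 (- b - 1 - 1)).
    assert (0 < al * a * (a + 1)) by (apply Rmult_lt_0_compat; nra).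
    assert (0 < be * b * (b + 1)) by (apply Rmult_lt_0_compat; nra). nra. }
  apply Rabs_triang_inv2.
Qed.
Lemma Wpot_eq al12 al13 al23 a be12 be13 be23 b x1 x2 x3 :
  Wpot al12 al13 al23 a be12 be13 be23 b x1 x2 x3 =
  psi a b al12 be12 (x1 - x2) + psi a b al13 be13 (x1 - x3) + psi a b al23 be23 (x2 - x3).
Proof. unfold Wpot, Upot, Vpot, pairpot, psi. ring. Qed.

Lemma dW1 al12 al13 al23 a be12 be13 be23 b x1 x2 x3 : noncollision x1 x2 x3 ->
  derivable_pt_lim (fun x => Wpot al12 al13 al23 a be12 be13 be23 b x x2 x3) x1
    (dpsi a b al12 be12 (x1 - x2) + dpsi a b al13 be13 (x1 - x3)).
Proof.
  intros [H12 [H23 H13]].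
  apply (dlim_ext (fun x => psi a b al12 be12 (x - x2) + psi a b al13 be13 (x - x3) + psi a b al23 be23 (x2 - x3))).
  { intros; rewrite Wpot_eq; auto. }
  rewrite <- (Rplus_0_r (_ + _)).
  apply dlim_add; [apply dlim_add|apply dlim_const]; apply dlim_psi_shift; lra.
Qed.

Lemma dW2 al12 al13 al23 a be12 be13 be23 b x1 x2 x3 : noncollision x1 x2 x3 ->
  derivable_pt_lim (fun x => Wpot al12 al13 al23 a be12 be13 be23 b x1 x x3) x2
    (- dpsi a b al12 be12 (x1 - x2) + dpsi a b al23 be23 (x2 - x3)).
Proof.
  intros [H12 [H23 H13]].
  apply (dlim_ext (fun x => psi a b al12 be12 (x1 - x) + psi a b al13 be13 (x1 - x3) + psi a b al23 be23 (x - x3))).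
  { intros; rewrite Wpot_eq; auto. }
  replace (- dpsi a b al12 be12 (x1 - x2) + dpsi a b al23 be23 (x2 - x3)) with
    (- dpsi a b al12 be12 (x1 - x2) + 0 + dpsi a b al23 be23 (x2 - x3)) by ring.
  apply dlim_add; [apply dlim_add|].
  - apply dlim_psi_shift2; lra.
  - apply dlim_const.
  - apply dlim_psi_shift; lra.
Qed.

Lemma dW3 al12 al13 al23 a be12 be13 be23 b x1 x2 x3 : noncollision x1 x2 x3 ->
  derivable_pt_lim (fun x => Wpot al12 al13 al23 a be12 be13 be23 b x1 x2 x) x3
    (- dpsi a b al13 be13 (x1 - x3) - dpsi a b al23 be23 (x2 - x3)).
Proof.
  intros [H12 [H23 H13]].
  apply (dlim_ext (fun x => psi a b al12 be12 (x1 - x2) + psi a b al13 be13 (x1 - x) + psi a b al23 be23 (x2 - x))).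
  { intros; rewrite Wpot_eq; auto. }
  replace (- dpsi a b al13 be13 (x1 - x3) - dpsi a b al23 be23 (x2 - x3)) with
    (0 + - dpsi a b al13 be13 (x1 - x3) + - dpsi a b al23 be23 (x2 - x3)) by ring.
  apply dlim_add; [apply dlim_add|].
  - apply dlim_const.
  - apply dlim_psi_shift2; lra.
  - apply dlim_psi_shift2; lra.
Qed.

Definition Fv (m1 m2 m3 al12 al13 al23 be12 be13 be23 a b : R) (u : nat -> R) (i : nat) : R :=
  match i with
  | 0%nat => u 3%nat / m1
  | 1%nat => u 4%nat / m2
  | 2%nat => u 5%nat / m3
  | 3%nat => - (dpsi a b al12 be12 (u 0%nat - u 1%nat) + dpsi a b al13 be13 (u 0%nat - u 2%nat))
  | 4%nat => - (- dpsi a b al12 be12 (u 0%nat - u 1%nat) + dpsi a b al23 be23 (u 1%nat - u 2%nat))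
  | 5%nat => - (- dpsi a b al13 be13 (u 0%nat - u 2%nat) - dpsi a b al23 be23 (u 1%nat - u 2%nat))
  | _ => 0
  end.

Lemma Fv_ext m1 m2 m3 al12 al13 al23 be12 be13 be23 a b u v i :
  (forall j, (j < 6)%nat -> u j = v j) ->
  Fv m1 m2 m3 al12 al13 al23 be12 be13 be23 a b u i = Fv m1 m2 m3 al12 al13 al23 be12 be13 be23 a b v i.
Proof.
  intros H. unfold Fv. rewrite !H by lia. reflexivity.
Qed.

Definition Yv (q1 q2 q3 p1 p2 p3 : R -> R) (t : R) (i : nat) : R :=
  match i with
  | 0%nat => q1 t | 1%nat => q2 t | 2%nat => q3 t
  | 3%nat => p1 t | 4%nat => p2 t | 5%nat => p3 t | _ => 0 end.

Lemma sol_vec m1 m2 m3 al12 al13 al23 be12 be13 be23 a b q1 q2 q3 p1 p2 p3 t0 t1 :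
  is_solution m1 m2 m3 (Wpot al12 al13 al23 a be12 be13 be23 b) q1 q2 q3 p1 p2 p3 t0 t1 ->
  forall t, t0 < t < t1 -> noncollision (q1 t) (q2 t) (q3 t) /\
    forall i, (i < 6)%nat ->
      derivable_pt_lim (fun s => Yv q1 q2 q3 p1 p2 p3 s i) t
        (Fv m1 m2 m3 al12 al13 al23 be12 be13 be23 a b (Yv q1 q2 q3 p1 p2 p3 t) i).
Proof.
  intros Hs t Ht. destruct (Hs t Ht) as [Hnc [Hq1 [Hq2 [Hq3 [[v1 [Hv1 Hw1]] [[v2 [Hv2 Hw2]] [v3 [Hv3 Hw3]]]]]]]].
  split; auto.
  pose proof (uniqueness_limite _ _ _ _ Hw1 (dW1 al12 al13 al23 a be12 be13 be23 b _ _ _ Hnc)) as E1.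
  pose proof (uniqueness_limite _ _ _ _ Hw2 (dW2 al12 al13 al23 a be12 be13 be23 b _ _ _ Hnc)) as E2.
  pose proof (uniqueness_limite _ _ _ _ Hw3 (dW3 al12 al13 al23 a be12 be13 be23 b _ _ _ Hnc)) as E3.
  intros i Hi. destruct i as [|[|[|[|[|[|i]]]]]]; simpl; auto.
  - replace (- (dpsi a b al12 be12 (q1 t - q2 t) + dpsi a b al13 be13 (q1 t - q3 t))) with v1 by lra. auto.
  - replace (- (- dpsi a b al12 be12 (q1 t - q2 t) + dpsi a b al23 be23 (q2 t - q3 t))) with v2 by lra. auto.
  - replace (- (- dpsi a b al13 be13 (q1 t - q3 t) - dpsi a b al23 be23 (q2 t - q3 t))) with v3 by lra. auto.
  - lia.
Qed.
Lemma abs_le0 x : Rabs x <= 0 -> x = 0.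
Proof. intros H. unfold Rabs in H; destruct Rcase_abs in H; lra. Qed.

Lemma dlim_sq f t l k : derivable_pt_lim f t l ->
  derivable_pt_lim (fun s => f s * f s / k) t (2 * f t * l / k).
Proof.
  intros H.
  pose proof (derivable_pt_lim_scal (mult_fct f f) (/ k) t _ (derivable_pt_lim_mult f f t l l H H)) as H2.
  apply (dlim_ext (mult_real_fct (/ k) (mult_fct f f))).
  { intros; unfold mult_real_fct, mult_fct, Rdiv; ring. }
  replace (2 * f t * l / k) with (/ k * (l * f t + f t * l)) by (unfold Rdiv; ring). exact H2.
Qed.

Lemma dlim_psi_comp a b al be f g t lf lg : f t - g t <> 0 ->
  derivable_pt_lim f t lf -> derivable_pt_lim g t lg ->
  derivable_pt_lim (fun s => psi a b al be (f s - g s)) t (dpsi a b al be (f t - g t) * (lf - lg)).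
Proof.
  intros Hn Hf Hg.
  pose proof (derivable_pt_lim_minus f g t lf lg Hf Hg) as Hm.
  pose proof (derivable_pt_lim_comp (minus_fct f g) (psi a b al be) t _ _ Hm (dpsi_ok a b al be _ Hn)) as Hc.
  apply (dlim_ext (comp (psi a b al be) (minus_fct f g))). { intros; reflexivity. }
  exact Hc.
Qed.

Definition En (m1 m2 m3 al12 al13 al23 be12 be13 be23 a b : R) (q1 q2 q3 p1 p2 p3 : R -> R) (t : R) :=
  p1 t * p1 t / (2 * m1) + p2 t * p2 t / (2 * m2) + p3 t * p3 t / (2 * m3)
  + psi a b al12 be12 (q1 t - q2 t) + psi a b al13 be13 (q1 t - q3 t) + psi a b al23 be23 (q2 t - q3 t).

Lemma energy_deriv m1 m2 m3 al12 al13 al23 be12 be13 be23 a b q1 q2 q3 p1 p2 p3 t0 t1 :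
  0 < m1 -> 0 < m2 -> 0 < m3 ->
  is_solution m1 m2 m3 (Wpot al12 al13 al23 a be12 be13 be23 b) q1 q2 q3 p1 p2 p3 t0 t1 ->
  forall t, t0 < t < t1 ->
    derivable_pt_lim (En m1 m2 m3 al12 al13 al23 be12 be13 be23 a b q1 q2 q3 p1 p2 p3) t 0.
Proof.
  intros Hm1 Hm2 Hm3 Hs t Ht.
  destruct (sol_vec _ _ _ _ _ _ _ _ _ _ _ _ _ _ _ _ _ _ _ Hs t Ht) as [[N12 [N23 N13]] HD].
  pose proof (HD 0%nat ltac:(lia)) as D0. pose proof (HD 1%nat ltac:(lia)) as D1.
  pose proof (HD 2%nat ltac:(lia)) as D2. pose proof (HD 3%nat ltac:(lia)) as D3.
  pose proof (HD 4%nat ltac:(lia)) as D4. pose proof (HD 5%nat ltac:(lia)) as D5.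
  simpl in D0, D1, D2, D3, D4, D5.
  set (d12 := dpsi a b al12 be12 (q1 t - q2 t)) in *.
  set (d13 := dpsi a b al13 be13 (q1 t - q3 t)) in *.
  set (d23 := dpsi a b al23 be23 (q2 t - q3 t)) in *.
  unfold En.
  replace 0 with (2 * p1 t * (- (d12 + d13)) / (2 * m1) + 2 * p2 t * (- (- d12 + d23)) / (2 * m2)
     + 2 * p3 t * (- (- d13 - d23)) / (2 * m3)
     + d12 * (p1 t / m1 - p2 t / m2) + d13 * (p1 t / m1 - p3 t / m3) + d23 * (p2 t / m2 - p3 t / m3))
    by (field; lra).
  repeat apply dlim_add; try (apply dlim_sq; assumption); unfold d12, d13, d23;
    apply dlim_psi_comp; auto; lra.
Qed.

Lemma energy_const m1 m2 m3 al12 al13 al23 be12 be13 be23 a b q1 q2 q3 p1 p2 p3 t0 t1 :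
  0 < m1 -> 0 < m2 -> 0 < m3 ->
  is_solution m1 m2 m3 (Wpot al12 al13 al23 a be12 be13 be23 b) q1 q2 q3 p1 p2 p3 t0 t1 ->
  forall t t', t0 < t < t1 -> t0 < t' < t1 ->
  En m1 m2 m3 al12 al13 al23 be12 be13 be23 a b q1 q2 q3 p1 p2 p3 t =
  En m1 m2 m3 al12 al13 al23 be12 be13 be23 a b q1 q2 q3 p1 p2 p3 t'.
Proof.
  intros Hm1 Hm2 Hm3 Hs t t' Ht Ht'.
  pose proof (bound_deriv2 (En m1 m2 m3 al12 al13 al23 be12 be13 be23 a b q1 q2 q3 p1 p2 p3)
     (fun _ => 0) (Rmin t t') (Rmax t t') t' t 0) as H.
  assert (Rabs (En m1 m2 m3 al12 al13 al23 be12 be13 be23 a b q1 q2 q3 p1 p2 p3 t -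
                En m1 m2 m3 al12 al13 al23 be12 be13 be23 a b q1 q2 q3 p1 p2 p3 t') <= 0).
  { eapply Rle_trans; [apply H|right; ring].
    - split; [apply Rmin_r| apply Rmax_r].
    - split; [apply Rmin_l| apply Rmax_l].
    - intros c Hc. apply (energy_deriv _ _ _ _ _ _ _ _ _ _ _ _ _ _ _ _ _ t0 t1); auto.
      unfold Rmin, Rmax in Hc; destruct (Rle_dec t t'); lra.
    - intros; rewrite Rabs_R0; lra. }
  apply abs_le0 in H0. lra.
Qed.
Lemma abs_sq_bd p Q : p * p <= Q -> Rabs p <= Q + 1.
Proof. intros H. pose proof (Rabs_pos p). assert (Rabs p * Rabs p = p * p) by (rewrite <- Rabs_mult; apply Rabs_right; nra). nra. Qed.

Lemma apriori m1 m2 m3 al12 al13 al23 be12 be13 be23 a b q1 q2 q3 p1 p2 p3 t0 t1 :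
  0 < m1 -> 0 < m2 -> 0 < m3 -> 0 < al12 -> 0 < al13 -> 0 < al23 ->
  0 < be12 -> 0 < be13 -> 0 < be23 -> 0 < a < b -> t0 < t1 ->
  is_solution m1 m2 m3 (Wpot al12 al13 al23 a be12 be13 be23 b) q1 q2 q3 p1 p2 p3 t0 t1 ->
  exists del P, 0 < del /\ 0 <= P /\ forall t, t0 < t < t1 ->
    del <= Rabs (q1 t - q2 t) /\ del <= Rabs (q1 t - q3 t) /\ del <= Rabs (q2 t - q3 t) /\
    Rabs (p1 t) <= P /\ Rabs (p2 t) <= P /\ Rabs (p3 t) <= P.
Proof.
  intros Hm1 Hm2 Hm3 Ha12 Ha13 Ha23 Hb12 Hb13 Hb23 Hab Ht01 Hs.
  set (tm := (t0 + t1) / 2).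
  assert (Htm : t0 < tm < t1) by (unfold tm; lra).
  set (E0 := En m1 m2 m3 al12 al13 al23 be12 be13 be23 a b q1 q2 q3 p1 p2 p3 tm).
  destruct (psi_lower a b al12 be12 Hab Ha12 Hb12) as [C12 [HC12 L12]].
  destruct (psi_lower a b al13 be13 Hab Ha13 Hb13) as [C13 [HC13 L13]].
  destruct (psi_lower a b al23 be23 Hab Ha23 Hb23) as [C23 [HC23 L23]].
  set (K := E0 + C12 + C13 + C23).
  destruct (psi_gap a b al12 be12 K Hab Ha12 Hb12) as [d12 [Hd12 G12]].
  destruct (psi_gap a b al13 be13 K Hab Ha13 Hb13) as [d13 [Hd13 G13]].
  destruct (psi_gap a b al23 be23 K Hab Ha23 Hb23) as [d23 [Hd23 G23]].
  set (K' := Rmax K 0).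
  assert (HK' : K <= K' /\ 0 <= K') by (split; [apply Rmax_l| apply Rmax_r]).
  exists (Rmin d12 (Rmin d13 d23)), (2 * (m1 + m2 + m3) * K' + 1).
  split. { apply Rmin_pos; auto. apply Rmin_pos; auto. }
  split. { nra. }
  intros t Ht.
  pose proof (energy_const _ _ _ _ _ _ _ _ _ _ _ _ _ _ _ _ _ t0 t1 Hm1 Hm2 Hm3 Hs t tm Ht Htm) as HE.
  fold E0 in HE. unfold En in HE.
  destruct (Hs t Ht) as [[N12 [N23 N13]] _].
  pose proof (L12 (q1 t - q2 t) ltac:(lra)). pose proof (L13 (q1 t - q3 t) ltac:(lra)).
  pose proof (L23 (q2 t - q3 t) ltac:(lra)).
  assert (K1 : 0 <= p1 t * p1 t / (2 * m1)) by (apply Rle_mult_inv_pos; nra).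
  assert (K2 : 0 <= p2 t * p2 t / (2 * m2)) by (apply Rle_mult_inv_pos; nra).
  assert (K3 : 0 <= p3 t * p3 t / (2 * m3)) by (apply Rle_mult_inv_pos; nra).
  pose proof (Rmin_l d12 (Rmin d13 d23)). pose proof (Rmin_r d12 (Rmin d13 d23)).
  pose proof (Rmin_l d13 d23). pose proof (Rmin_r d13 d23).
  repeat split.
  - pose proof (G12 (q1 t - q2 t) ltac:(lra) ltac:(unfold K; lra)). lra.
  - pose proof (G13 (q1 t - q3 t) ltac:(lra) ltac:(unfold K; lra)). lra.
  - pose proof (G23 (q2 t - q3 t) ltac:(lra) ltac:(unfold K; lra)). lra.
  - apply abs_sq_bd. assert (HH : p1 t * p1 t / (2 * m1) <= K) by (unfold K; lra).
    apply (Rmult_le_compat_l (2 * m1)) in HH; [|lra].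
    replace (2 * m1 * (p1 t * p1 t / (2 * m1))) with (p1 t * p1 t) in HH by (field; lra).
    nra.
  - apply abs_sq_bd. assert (HH : p2 t * p2 t / (2 * m2) <= K) by (unfold K; lra).
    apply (Rmult_le_compat_l (2 * m2)) in HH; [|lra].
    replace (2 * m2 * (p2 t * p2 t / (2 * m2))) with (p2 t * p2 t) in HH by (field; lra).
    nra.
  - apply abs_sq_bd. assert (HH : p3 t * p3 t / (2 * m3) <= K) by (unfold K; lra).
    apply (Rmult_le_compat_l (2 * m3)) in HH; [|lra].
    replace (2 * m3 * (p3 t * p3 t / (2 * m3))) with (p3 t * p3 t) in HH by (field; lra).
    nra.
Qed.
Lemma abs_le_r x y : Rabs x <= y -> - y <= x <= y.
Proof. unfold Rabs; destruct Rcase_abs; lra. Qed.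
Lemma abs_le_l x y : - y <= x <= y -> Rabs x <= y.
Proof. unfold Rabs; destruct Rcase_abs; lra. Qed.

Lemma Hb_pos a b al be r0 : 0 < a -> 0 < b -> 0 < al -> 0 < be -> 0 <= Hb a b al be r0.
Proof.
  intros. unfold Hb. pose proof (rp_pos r0 (- a - 1)). pose proof (rp_pos r0 (- b - 1)).
  assert (0 < al * a) by nra. assert (0 < be * b) by nra. nra.
Qed.

Lemma Kh_pos a b al be r0 : 0 < a -> 0 < b -> 0 < al -> 0 < be -> 0 <= Kh a b al be r0.
Proof.
  intros. unfold Kh. pose proof (rp_pos r0 (- a - 1 - 1)). pose proof (rp_pos r0 (- b - 1 - 1)).
  assert (0 < al * a * (a + 1)) by (apply Rmult_lt_0_compat; nra).
  assert (0 < be * b * (b + 1)) by (apply Rmult_lt_0_compat; nra). nra.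
Qed.

Definition Mc (m1 m2 m3 al12 al13 al23 be12 be13 be23 a b r0 Q : R) :=
  Q * (/ m1 + / m2 + / m3) + 2 * (Hb a b al12 be12 r0 + Hb a b al13 be13 r0 + Hb a b al23 be23 r0).
Definition Lc (m1 m2 m3 al12 al13 al23 be12 be13 be23 a b r0 : R) :=
  / m1 + / m2 + / m3 + 2 * (Kh a b al12 be12 r0 + Kh a b al13 be13 r0 + Kh a b al23 be23 r0).

Lemma F_bd m1 m2 m3 al12 al13 al23 be12 be13 be23 a b r0 Q u :
  0 < m1 -> 0 < m2 -> 0 < m3 -> 0 < al12 -> 0 < al13 -> 0 < al23 ->
  0 < be12 -> 0 < be13 -> 0 < be23 -> 0 < a -> 0 < b -> 0 < r0 ->
  r0 <= Rabs (u 0%nat - u 1%nat) -> r0 <= Rabs (u 0%nat - u 2%nat) -> r0 <= Rabs (u 1%nat - u 2%nat) ->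
  Rabs (u 3%nat) <= Q -> Rabs (u 4%nat) <= Q -> Rabs (u 5%nat) <= Q ->
  forall i, (i < 6)%nat -> Rabs (Fv m1 m2 m3 al12 al13 al23 be12 be13 be23 a b u i) <= Mc m1 m2 m3 al12 al13 al23 be12 be13 be23 a b r0 Q.
Proof.
  intros Hm1 Hm2 Hm3 Ha12 Ha13 Ha23 Hb12 Hb13 Hb23 Ha Hb0 Hr0 G01 G02 G12 P3 P4 P5 i Hi.
  pose proof (dpsi_bd a b al12 be12 r0 _ Ha Hb0 Ha12 Hb12 Hr0 G01) as D01.
  pose proof (dpsi_bd a b al13 be13 r0 _ Ha Hb0 Ha13 Hb13 Hr0 G02) as D02.
  pose proof (dpsi_bd a b al23 be23 r0 _ Ha Hb0 Ha23 Hb23 Hr0 G12) as D12.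
  pose proof (Hb_pos a b al12 be12 r0 Ha Hb0 Ha12 Hb12).
  pose proof (Hb_pos a b al13 be13 r0 Ha Hb0 Ha13 Hb13).
  pose proof (Hb_pos a b al23 be23 r0 Ha Hb0 Ha23 Hb23).
  assert (HQ : 0 <= Q) by (pose proof (Rabs_pos (u 3%nat)); lra).
  pose proof (Rinv_0_lt_compat m1 Hm1). pose proof (Rinv_0_lt_compat m2 Hm2). pose proof (Rinv_0_lt_compat m3 Hm3).
  assert (Q * / m1 <= Q * (/ m1 + / m2 + / m3)) by nra.
  assert (Q * / m2 <= Q * (/ m1 + / m2 + / m3)) by nra.
  assert (Q * / m3 <= Q * (/ m1 + / m2 + / m3)) by nra.
  assert (0 <= Q * (/ m1 + / m2 + / m3)) by nra.
  unfold Mc. apply abs_le_r in D01, D02, D12.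
  destruct i as [|[|[|[|[|[|i]]]]]]; simpl; try lia.
  - unfold Rdiv. rewrite Rabs_mult, (Rabs_right (/ m1)) by lra.
    assert (Rabs (u 3%nat) * / m1 <= Q * / m1) by (apply Rmult_le_compat_r; lra). lra.
  - unfold Rdiv. rewrite Rabs_mult, (Rabs_right (/ m2)) by lra.
    assert (Rabs (u 4%nat) * / m2 <= Q * / m2) by (apply Rmult_le_compat_r; lra). lra.
  - unfold Rdiv. rewrite Rabs_mult, (Rabs_right (/ m3)) by lra.
    assert (Rabs (u 5%nat) * / m3 <= Q * / m3) by (apply Rmult_le_compat_r; lra). lra.
  - apply abs_le_l. lra.
  - apply abs_le_l. lra.
  - apply abs_le_l. lra.
Qed.

Lemma F_lip m1 m2 m3 al12 al13 al23 be12 be13 be23 a b r0 u v B :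
  0 < m1 -> 0 < m2 -> 0 < m3 -> 0 < al12 -> 0 < al13 -> 0 < al23 ->
  0 < be12 -> 0 < be13 -> 0 < be23 -> 0 < a -> 0 < b -> 0 < r0 ->
  samesign r0 (u 0%nat - u 1%nat) (v 0%nat - v 1%nat) ->
  samesign r0 (u 0%nat - u 2%nat) (v 0%nat - v 2%nat) ->
  samesign r0 (u 1%nat - u 2%nat) (v 1%nat - v 2%nat) ->
  (forall j, (j < 6)%nat -> Rabs (u j - v j) <= B) ->
  forall i, (i < 6)%nat -> Rabs (Fv m1 m2 m3 al12 al13 al23 be12 be13 be23 a b u i -
     Fv m1 m2 m3 al12 al13 al23 be12 be13 be23 a b v i) <= Lc m1 m2 m3 al12 al13 al23 be12 be13 be23 a b r0 * B.
Proof.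
  intros Hm1 Hm2 Hm3 Ha12 Ha13 Ha23 Hb12 Hb13 Hb23 Ha Hb0 Hr0 S01 S02 S12 HB i Hi.
  pose proof (dpsi_lip a b al12 be12 r0 _ _ Ha Hb0 Ha12 Hb12 Hr0 S01) as D01.
  pose proof (dpsi_lip a b al13 be13 r0 _ _ Ha Hb0 Ha13 Hb13 Hr0 S02) as D02.
  pose proof (dpsi_lip a b al23 be23 r0 _ _ Ha Hb0 Ha23 Hb23 Hr0 S12) as D12.
  pose proof (Kh_pos a b al12 be12 r0 Ha Hb0 Ha12 Hb12).
  pose proof (Kh_pos a b al13 be13 r0 Ha Hb0 Ha13 Hb13).
  pose proof (Kh_pos a b al23 be23 r0 Ha Hb0 Ha23 Hb23).
  set (K12 := Kh a b al12 be12 r0) in *. set (K13 := Kh a b al13 be13 r0) in *.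
  set (K23 := Kh a b al23 be23 r0) in *.
  pose proof (abs_le_r _ _ (HB 0%nat ltac:(lia))). pose proof (abs_le_r _ _ (HB 1%nat ltac:(lia))).
  pose proof (abs_le_r _ _ (HB 2%nat ltac:(lia))). pose proof (abs_le_r _ _ (HB 3%nat ltac:(lia))).
  pose proof (abs_le_r _ _ (HB 4%nat ltac:(lia))). pose proof (abs_le_r _ _ (HB 5%nat ltac:(lia))).
  assert (HB0 : 0 <= B) by lra.
  assert (E01 : Rabs (u 0%nat - u 1%nat - (v 0%nat - v 1%nat)) <= 2 * B) by (apply abs_le_l; lra).
  assert (E02 : Rabs (u 0%nat - u 2%nat - (v 0%nat - v 2%nat)) <= 2 * B) by (apply abs_le_l; lra).
  assert (E12 : Rabs (u 1%nat - u 2%nat - (v 1%nat - v 2%nat)) <= 2 * B) by (apply abs_le_l; lra).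
  assert (F01 : K12 * Rabs (u 0%nat - u 1%nat - (v 0%nat - v 1%nat)) <= K12 * (2 * B)) by (apply Rmult_le_compat_l; lra).
  assert (F02 : K13 * Rabs (u 0%nat - u 2%nat - (v 0%nat - v 2%nat)) <= K13 * (2 * B)) by (apply Rmult_le_compat_l; lra).
  assert (F12 : K23 * Rabs (u 1%nat - u 2%nat - (v 1%nat - v 2%nat)) <= K23 * (2 * B)) by (apply Rmult_le_compat_l; lra).
  apply abs_le_r in D01, D02, D12.
  pose proof (Rinv_0_lt_compat m1 Hm1). pose proof (Rinv_0_lt_compat m2 Hm2). pose proof (Rinv_0_lt_compat m3 Hm3).
  assert (0 <= (/ m2 + / m3) * B) by nra.
  assert (0 <= (/ m1 + / m3) * B) by nra.
  assert (0 <= (/ m1 + / m2) * B) by nra.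
  assert (0 <= (/ m1 + / m2 + / m3) * B) by nra.
  unfold Lc. fold K12 K13 K23.
  destruct i as [|[|[|[|[|[|i]]]]]]; simpl; try lia.
  - replace (u 3%nat / m1 - v 3%nat / m1) with ((u 3%nat - v 3%nat) * / m1) by (field; lra).
    rewrite Rabs_mult, (Rabs_right (/ m1)) by lra.
    assert (Rabs (u 3%nat - v 3%nat) * / m1 <= B * / m1) by (apply Rmult_le_compat_r; [lra|apply HB; lia]). nra.
  - replace (u 4%nat / m2 - v 4%nat / m2) with ((u 4%nat - v 4%nat) * / m2) by (field; lra).
    rewrite Rabs_mult, (Rabs_right (/ m2)) by lra.
    assert (Rabs (u 4%nat - v 4%nat) * / m2 <= B * / m2) by (apply Rmult_le_compat_r; [lra|apply HB; lia]). nra.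
  - replace (u 5%nat / m3 - v 5%nat / m3) with ((u 5%nat - v 5%nat) * / m3) by (field; lra).
    rewrite Rabs_mult, (Rabs_right (/ m3)) by lra.
    assert (Rabs (u 5%nat - v 5%nat) * / m3 <= B * / m3) by (apply Rmult_le_compat_r; [lra|apply HB; lia]). nra.
  - apply abs_le_l. nra.
  - apply abs_le_l. nra.
  - apply abs_le_l. nra.
Qed.
Definition prj (y0 : nat -> R) (rho : R) (u : nat -> R) (j : nat) := Rmax (y0 j - rho) (Rmin (y0 j + rho) (u j)).

Lemma prj_in y0 rho u j : 0 <= rho -> Rabs (prj y0 rho u j - y0 j) <= rho.
Proof. intros; apply abs_le_l; unfold prj, Rmax, Rmin; repeat destruct Rle_dec; lra. Qed.

Lemma prj_lip y0 rho u v j : 0 <= rho -> Rabs (prj y0 rho u j - prj y0 rho v j) <= Rabs (u j - v j).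
Proof.
  intros; unfold prj, Rmax, Rmin; repeat destruct Rle_dec; unfold Rabs; repeat destruct Rcase_abs; lra.
Qed.

Lemma prj_id y0 rho u j : Rabs (u j - y0 j) <= rho -> prj y0 rho u j = u j.
Proof. intros H; apply abs_le_r in H; unfold prj, Rmax, Rmin; repeat destruct Rle_dec; lra. Qed.

Definition inball (y0 : nat -> R) (rho : R) (u : nat -> R) := forall j, (j < 6)%nat -> Rabs (u j - y0 j) <= rho.

Lemma ss_ball del x0 x y : 0 < del -> del <= Rabs x0 -> Rabs (x - x0) <= del / 2 -> Rabs (y - x0) <= del / 2 ->
  samesign (del / 2) x y.
Proof.
  intros Hd H0 Hx Hy. apply abs_le_r in Hx, Hy. unfold samesign.
  unfold Rabs in H0; destruct Rcase_abs in H0; [right|left]; lra.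
Qed.

Lemma ball_reg y0 del P u : 0 < del -> inball y0 (del / 4) u ->
  del <= Rabs (y0 0%nat - y0 1%nat) -> del <= Rabs (y0 0%nat - y0 2%nat) -> del <= Rabs (y0 1%nat - y0 2%nat) ->
  Rabs (y0 3%nat) <= P -> Rabs (y0 4%nat) <= P -> Rabs (y0 5%nat) <= P ->
  del / 2 <= Rabs (u 0%nat - u 1%nat) /\ del / 2 <= Rabs (u 0%nat - u 2%nat) /\ del / 2 <= Rabs (u 1%nat - u 2%nat) /\
  Rabs (u 3%nat) <= P + del / 4 /\ Rabs (u 4%nat) <= P + del / 4 /\ Rabs (u 5%nat) <= P + del / 4.
Proof.
  intros Hd Hb G01 G02 G12 P3 P4 P5.
  pose proof (abs_le_r _ _ (Hb 0%nat ltac:(lia))). pose proof (abs_le_r _ _ (Hb 1%nat ltac:(lia))).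
  pose proof (abs_le_r _ _ (Hb 2%nat ltac:(lia))). pose proof (abs_le_r _ _ (Hb 3%nat ltac:(lia))).
  pose proof (abs_le_r _ _ (Hb 4%nat ltac:(lia))). pose proof (abs_le_r _ _ (Hb 5%nat ltac:(lia))).
  apply abs_le_r in P3, P4, P5.
  unfold Rabs in G01, G02, G12 |- *. repeat destruct Rcase_abs; repeat split; lra.
Qed.

Lemma ball_ss y0 del u v : 0 < del -> inball y0 (del / 4) u -> inball y0 (del / 4) v ->
  del <= Rabs (y0 0%nat - y0 1%nat) -> del <= Rabs (y0 0%nat - y0 2%nat) -> del <= Rabs (y0 1%nat - y0 2%nat) ->
  samesign (del / 2) (u 0%nat - u 1%nat) (v 0%nat - v 1%nat) /\
  samesign (del / 2) (u 0%nat - u 2%nat) (v 0%nat - v 2%nat) /\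
  samesign (del / 2) (u 1%nat - u 2%nat) (v 1%nat - v 2%nat).
Proof.
  intros Hd Hu Hv G01 G02 G12.
  pose proof (abs_le_r _ _ (Hu 0%nat ltac:(lia))). pose proof (abs_le_r _ _ (Hu 1%nat ltac:(lia))).
  pose proof (abs_le_r _ _ (Hu 2%nat ltac:(lia))).
  pose proof (abs_le_r _ _ (Hv 0%nat ltac:(lia))). pose proof (abs_le_r _ _ (Hv 1%nat ltac:(lia))).
  pose proof (abs_le_r _ _ (Hv 2%nat ltac:(lia))).
  split; [|split].
  - apply (ss_ball del (y0 0%nat - y0 1%nat)); auto; apply abs_le_l; lra.
  - apply (ss_ball del (y0 0%nat - y0 2%nat)); auto; apply abs_le_l; lra.
  - apply (ss_ball del (y0 1%nat - y0 2%nat)); auto; apply abs_le_l; lra.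
Qed.

Definition sol_at (m1 m2 m3 : R) (W : R -> R -> R -> R) (q1 q2 q3 p1 p2 p3 : R -> R) (t : R) : Prop :=
    noncollision (q1 t) (q2 t) (q3 t) /\
    derivable_pt_lim q1 t (p1 t / m1) /\
    derivable_pt_lim q2 t (p2 t / m2) /\
    derivable_pt_lim q3 t (p3 t / m3) /\
    (exists v, derivable_pt_lim p1 t v /\
       derivable_pt_lim (fun x => W x (q2 t) (q3 t)) (q1 t) (- v)) /\
    (exists v, derivable_pt_lim p2 t v /\
       derivable_pt_lim (fun x => W (q1 t) x (q3 t)) (q2 t) (- v)) /\
    (exists v, derivable_pt_lim p3 t v /\
       derivable_pt_lim (fun x => W (q1 t) (q2 t) x) (q3 t) (- v)).

Lemma sol_at_loc m1 m2 m3 W q1 q2 q3 p1 p2 p3 q1' q2' q3' p1' p2' p3' t d :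
  0 < d -> (forall y, Rabs (y - t) < d ->
    q1' y = q1 y /\ q2' y = q2 y /\ q3' y = q3 y /\ p1' y = p1 y /\ p2' y = p2 y /\ p3' y = p3 y) ->
  sol_at m1 m2 m3 W q1 q2 q3 p1 p2 p3 t -> sol_at m1 m2 m3 W q1' q2' q3' p1' p2' p3' t.
Proof.
  intros Hd Heq [Hnc [D1 [D2 [D3 [[v1 [V1 W1]] [[v2 [V2 W2]] [v3 [V3 W3]]]]]]]].
  assert (Ht : Rabs (t - t) < d) by (replace (t - t) with 0 by ring; rewrite Rabs_R0; auto).
  destruct (Heq t Ht) as [E1 [E2 [E3 [E4 [E5 E6]]]]].
  unfold sol_at. rewrite E1, E2, E3, E4, E5, E6.
  assert (L : forall f g, (forall y, Rabs (y - t) < d -> g y = f y) -> forall l, derivable_pt_lim f t l -> derivable_pt_lim g t l).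
  { intros f g Hfg l Hf. apply (dlim_loc f g t l d); auto. intros; symmetry; auto. }
  split; [exact Hnc|]. split; [|split; [|split; [|split; [|split]]]].
  - apply (L q1); auto. intros y Hy; apply Heq; auto.
  - apply (L q2); auto. intros y Hy; apply Heq; auto.
  - apply (L q3); auto. intros y Hy; apply Heq; auto.
  - exists v1; split; auto. apply (L p1); auto. intros y Hy; apply Heq; auto.
  - exists v2; split; auto. apply (L p2); auto. intros y Hy; apply Heq; auto.
  - exists v3; split; auto. apply (L p3); auto. intros y Hy; apply Heq; auto.
Qed.

Lemma sol_from_vec m1 m2 m3 al12 al13 al23 be12 be13 be23 a b (Z : R -> nat -> R) t :
  noncollision (Z t 0%nat) (Z t 1%nat) (Z t 2%nat) ->
  (forall i, (i < 6)%nat -> derivable_pt_lim (fun s => Z s i) t (Fv m1 m2 m3 al12 al13 al23 be12 be13 be23 a b (Z t) i)) ->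
  sol_at m1 m2 m3 (Wpot al12 al13 al23 a be12 be13 be23 b)
    (fun s => Z s 0%nat) (fun s => Z s 1%nat) (fun s => Z s 2%nat)
    (fun s => Z s 3%nat) (fun s => Z s 4%nat) (fun s => Z s 5%nat) t.
Proof.
  intros Hnc HD.
  pose proof (HD 0%nat ltac:(lia)) as D0. pose proof (HD 1%nat ltac:(lia)) as D1.
  pose proof (HD 2%nat ltac:(lia)) as D2. pose proof (HD 3%nat ltac:(lia)) as D3.
  pose proof (HD 4%nat ltac:(lia)) as D4. pose proof (HD 5%nat ltac:(lia)) as D5.
  simpl in D0, D1, D2, D3, D4, D5.
  unfold sol_at. split; [exact Hnc|]. split; [exact D0|]. split; [exact D1|]. split; [exact D2|].
  split; [|split].
  - eexists; split; [exact D3|]. rewrite Ropp_involutive. apply dW1; auto.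
  - eexists; split; [exact D4|]. rewrite Ropp_involutive. apply dW2; auto.
  - eexists; split; [exact D5|]. rewrite Ropp_involutive. apply dW3; auto.
Qed.
Lemma forward m1 m2 m3 al12 al13 al23 be12 be13 be23 a b q1 q2 q3 p1 p2 p3 t0 t1 :
  0 < m1 -> 0 < m2 -> 0 < m3 -> 0 < al12 -> 0 < al13 -> 0 < al23 ->
  0 < be12 -> 0 < be13 -> 0 < be23 -> 0 < a < b -> t0 < t1 ->
  is_solution m1 m2 m3 (Wpot al12 al13 al23 a be12 be13 be23 b) q1 q2 q3 p1 p2 p3 t0 t1 ->
  exists d, 0 < d /\
     exists q1' q2' q3' p1' p2' p3' : R -> R,
       is_solution m1 m2 m3 (Wpot al12 al13 al23 a be12 be13 be23 b) q1' q2' q3' p1' p2' p3' t0 (t1 + d) /\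
       agree_on q1 q2 q3 p1 p2 p3 q1' q2' q3' p1' p2' p3' t0 t1.
Proof.
  intros Hm1 Hm2 Hm3 Ha12 Ha13 Ha23 Hb12 Hb13 Hb23 Hab Ht01 Hs.
  assert (Ha : 0 < a) by lra. assert (Hb0 : 0 < b) by lra.
  destruct (apriori _ _ _ _ _ _ _ _ _ _ _ _ _ _ _ _ _ _ _ Hm1 Hm2 Hm3 Ha12 Ha13 Ha23 Hb12 Hb13 Hb23 Hab Ht01 Hs)
    as [del [P [Hdel [HP Hbd]]]].
  set (Fv' := Fv m1 m2 m3 al12 al13 al23 be12 be13 be23 a b).
  set (r0 := del / 2). set (rho := del / 4).
  assert (Hr0 : 0 < r0) by (unfold r0; lra). assert (Hrho : 0 < rho) by (unfold rho; lra).
  set (M := Mc m1 m2 m3 al12 al13 al23 be12 be13 be23 a b r0 (P + rho)).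
  set (L := Lc m1 m2 m3 al12 al13 al23 be12 be13 be23 a b r0).
  pose proof (Rinv_0_lt_compat m1 Hm1). pose proof (Rinv_0_lt_compat m2 Hm2). pose proof (Rinv_0_lt_compat m3 Hm3).
  assert (HM : 0 <= M).
  { unfold M, Mc. pose proof (Hb_pos a b al12 be12 r0 Ha Hb0 Ha12 Hb12).
    pose proof (Hb_pos a b al13 be13 r0 Ha Hb0 Ha13 Hb13). pose proof (Hb_pos a b al23 be23 r0 Ha Hb0 Ha23 Hb23).
    assert (0 <= (P + rho) * (/ m1 + / m2 + / m3)) by (apply Rmult_le_pos; lra). lra. }
  assert (HL : 0 <= L).
  { unfold L, Lc. pose proof (Kh_pos a b al12 be12 r0 Ha Hb0 Ha12 Hb12).
    pose proof (Kh_pos a b al13 be13 r0 Ha Hb0 Ha13 Hb13). pose proof (Kh_pos a b al23 be23 r0 Ha Hb0 Ha23 Hb23). lra. }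
  set (h := Rmin (rho / (M + 1)) (/ (2 * (L + 1)))).
  assert (Hh : 0 < h).
  { unfold h. apply Rmin_pos; [apply Rdiv_lt_0_compat; lra| apply Rinv_0_lt_compat; lra]. }
  assert (HhM : h * M <= rho).
  { assert (h <= rho / (M + 1)) by (unfold h; apply Rmin_l).
    assert (h * M <= rho / (M + 1) * M) by (apply Rmult_le_compat_r; lra).
    replace (rho / (M + 1) * M) with (rho - rho / (M + 1)) in H3 by (field; lra).
    assert (0 < rho / (M + 1)) by (apply Rdiv_lt_0_compat; lra). lra. }
  assert (HLh : L * h <= / 2).
  { assert (h <= / (2 * (L + 1))) by (unfold h; apply Rmin_r).
    assert (L * h <= L * / (2 * (L + 1))) by (apply Rmult_le_compat_l; lra).
    replace (L * / (2 * (L + 1))) with (/ 2 - / (2 * (L + 1))) in H3 by (field; lra).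
    assert (0 < / (2 * (L + 1))) by (apply Rinv_0_lt_compat; lra). lra. }
  set (s := Rmax ((t0 + t1) / 2) (t1 - h / 2)).
  assert (Hs1 : t0 < s < t1) by (unfold s, Rmax; destruct Rle_dec; lra).
  assert (Hs2 : t1 - s <= h / 2) by (unfold s, Rmax; destruct Rle_dec; lra).
  set (Y := Yv q1 q2 q3 p1 p2 p3).
  set (y0 := Y s).
  destruct (Hbd s Hs1) as [Y01 [Y02 [Y12 [Y3 [Y4 Y5]]]]].
  change (del <= Rabs (y0 0%nat - y0 1%nat)) in Y01.
  change (del <= Rabs (y0 0%nat - y0 2%nat)) in Y02.
  change (del <= Rabs (y0 1%nat - y0 2%nat)) in Y12.
  change (Rabs (y0 3%nat) <= P) in Y3. change (Rabs (y0 4%nat) <= P) in Y4. change (Rabs (y0 5%nat) <= P) in Y5.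
  set (G := fun u i => Fv' (prj y0 rho u) i).
  assert (Hprjball : forall u, inball y0 rho (prj y0 rho u)) by (intros u j _; apply prj_in; lra).
  assert (HGbd : forall u i, (i < 6)%nat -> Rabs (G u i) <= M).
  { intros u i Hi.
    destruct (ball_reg y0 del P (prj y0 rho u) Hdel (Hprjball u) Y01 Y02 Y12 Y3 Y4 Y5) as [B1 [B2 [B3 [B4 [B5 B6]]]]].
    apply F_bd; auto. }
  assert (HGlip : Lipsch 6 G L).
  { intros u v B HB i Hi.
    destruct (ball_ss y0 del (prj y0 rho u) (prj y0 rho v) Hdel (Hprjball u) (Hprjball v) Y01 Y02 Y12) as [S1 [S2 S3]].
    apply F_lip; auto. intros j Hj. eapply Rle_trans; [apply prj_lip; lra| apply HB; auto]. }
  destruct (local_exist 6 G M L y0 s h Hh HL HM HLh HGlip HGbd) as [z [Hz0 Hzd]].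
  assert (Zball : forall t, s - h < t < s + h -> inball y0 rho (z t)).
  { intros t Ht j Hj. rewrite <- (Hz0 j Hj).
    eapply Rle_trans.
    { apply (bound_deriv2 (fun x => z x j) (fun x => G (z x) j) (Rmin s t) (Rmax s t) s t M).
      - split; [apply Rmin_l| apply Rmax_l].
      - split; [apply Rmin_r|apply Rmax_r].
      - intros c Hc. apply Hzd; auto. unfold Rmin, Rmax in Hc; destruct (Rle_dec s t); lra.
      - intros c _. apply HGbd; auto. }
    assert (Rabs (t - s) <= h) by (apply abs_le_l; lra).
    assert (M * Rabs (t - s) <= M * h) by (apply Rmult_le_compat_l; lra). lra. }
  assert (Gz : forall t i, s - h < t < s + h -> G (z t) i = Fv' (z t) i).
  { intros t i Ht. unfold G. apply Fv_ext. intros j Hj. apply prj_id. apply Zball; auto. }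
  assert (Hzd' : forall t, s - h < t < s + h -> forall i, (i < 6)%nat ->
             derivable_pt_lim (fun x => z x i) t (Fv' (z t) i)).
  { intros t Ht i Hi. rewrite <- Gz; auto. }
  pose proof (sol_vec _ _ _ _ _ _ _ _ _ _ _ _ _ _ _ _ _ _ _ Hs) as Ysol.
  assert (YF : forall c, t0 < c < t1 -> forall j, (j < 6)%nat -> Rabs (Fv' (Y c) j) <= M).
  { intros c Hc j Hj. destruct (Hbd c Hc) as [C01 [C02 [C12 [C3 [C4 C5]]]]].
    apply F_bd; auto; simpl; unfold r0; lra. }
  assert (Yball : forall t, s <= t < t1 -> inball y0 rho (Y t)).
  { intros t Ht j Hj. unfold y0.
    eapply Rle_trans.
    { apply (bound_deriv2 (fun x => Y x j) (fun x => Fv' (Y x) j) s t s t M); try lra.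
      - intros c Hc. apply Ysol; auto; lra.
      - intros c Hc. apply YF; auto; lra. }
    assert (Rabs (t - s) <= h) by (apply abs_le_l; lra).
    assert (M * Rabs (t - s) <= M * h) by (apply Rmult_le_compat_l; lra). lra. }
  assert (Uk : forall k t j, s <= t < t1 -> (j < 6)%nat -> Rabs (Y t j - z t j) <= 2 * rho * (/2)^k).
  { induction k; intros t j Ht Hj.
    - pose proof (abs_le_r _ _ (Yball t Ht j Hj)). pose proof (abs_le_r _ _ (Zball t ltac:(lra) j Hj)).
      simpl. apply abs_le_l. lra.
    - assert (Hsd : Rabs ((fun x => Y x j - z x j) t - (fun x => Y x j - z x j) s)
                      <= L * (2 * rho * (/2)^k) * Rabs (t - s)).
      { apply (bound_deriv2 (fun x => Y x j - z x j) (fun x => Fv' (Y x) j - Fv' (z x) j) s t s t); try lra.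
        - intros c Hc. apply derivable_pt_lim_minus.
          + apply Ysol; auto; lra.
          + apply Hzd'; auto; lra.
        - intros c Hc.
          destruct (ball_ss y0 del (Y c) (z c) Hdel (Yball c ltac:(lra)) (Zball c ltac:(lra)) Y01 Y02 Y12)
            as [S1 [S2 S3]].
          apply F_lip; auto. intros i Hi. apply IHk; auto; lra. }
      simpl in Hsd.
      assert (E : Y s j - z s j = 0) by (rewrite Hz0; auto; unfold y0; ring).
      rewrite E, Rminus_0_r in Hsd.
      pose proof (pow_le (/2) k ltac:(lra)).
      assert (HB : 0 <= 2 * rho * (/2)^k) by (apply Rmult_le_pos; lra).
      assert (Rabs (t - s) <= h / 2) by (apply abs_le_l; lra).
      assert (L * (2 * rho * (/ 2) ^ k) * Rabs (t - s) <= L * (2 * rho * (/ 2) ^ k) * (h / 2))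
        by (apply Rmult_le_compat_l; [apply Rmult_le_pos|]; lra).
      simpl. set (B := 2 * rho * (/ 2) ^ k) in *.
      replace (2 * rho * (/ 2 * (/ 2) ^ k)) with (B / 2) by (unfold B; field).
      assert (L * B * (h / 2) <= B / 4) by nra. lra. }
  assert (Yeq : forall t j, s <= t < t1 -> (j < 6)%nat -> Y t j = z t j).
  { intros t j Ht Hj. apply Rminus_diag_uniq. apply (geom_zero _ (2 * rho)). intros k. apply Uk; auto. }
  set (ext := fun (f : R -> R) (j : nat) (t : R) => if Rlt_dec t t1 then f t else z t j).
  exists (s + h - t1). split; [lra|].
  exists (ext q1 0%nat), (ext q2 1%nat), (ext q3 2%nat), (ext p1 3%nat), (ext p2 4%nat), (ext p3 5%nat).
  split.
  - intros t Ht.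
    change (sol_at m1 m2 m3 (Wpot al12 al13 al23 a be12 be13 be23 b)
      (ext q1 0%nat) (ext q2 1%nat) (ext q3 2%nat) (ext p1 3%nat) (ext p2 4%nat) (ext p3 5%nat) t).
    destruct (Rlt_dec t t1) as [Hlt|Hge].
    + apply (sol_at_loc m1 m2 m3 _ q1 q2 q3 p1 p2 p3 _ _ _ _ _ _ t (Rmin (t - t0) (t1 - t))).
      * apply Rmin_pos; lra.
      * intros y Hy. pose proof (Rmin_r (t - t0) (t1 - t)). pose proof (Rmin_l (t - t0) (t1 - t)).
        assert (Hy' : y < t1) by (unfold Rabs in Hy; destruct Rcase_abs in Hy; lra).
        unfold ext. destruct (Rlt_dec y t1); [repeat split; auto| lra].
      * exact (Hs t ltac:(lra)).
    + apply (sol_at_loc m1 m2 m3 _ (fun x => z x 0%nat) (fun x => z x 1%nat) (fun x => z x 2%nat)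
               (fun x => z x 3%nat) (fun x => z x 4%nat) (fun x => z x 5%nat) _ _ _ _ _ _ t
               (Rmin (t - s) (s + h - t))).
      * apply Rmin_pos; lra.
      * intros y Hy. pose proof (Rmin_l (t - s) (s + h - t)). pose proof (Rmin_r (t - s) (s + h - t)).
        assert (Hy' : s < y < s + h) by (unfold Rabs in Hy; destruct Rcase_abs in Hy; lra).
        unfold ext. destruct (Rlt_dec y t1) as [Hy1|Hy1].
        -- repeat split.
           ++ exact (Yeq y 0%nat ltac:(lra) ltac:(lia)).
           ++ exact (Yeq y 1%nat ltac:(lra) ltac:(lia)).
           ++ exact (Yeq y 2%nat ltac:(lra) ltac:(lia)).
           ++ exact (Yeq y 3%nat ltac:(lra) ltac:(lia)).
           ++ exact (Yeq y 4%nat ltac:(lra) ltac:(lia)).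
           ++ exact (Yeq y 5%nat ltac:(lra) ltac:(lia)).
        -- repeat split; reflexivity.
      * apply sol_from_vec.
        -- destruct (ball_reg y0 del P (z t) Hdel (Zball t ltac:(lra)) Y01 Y02 Y12 Y3 Y4 Y5) as [B1 [B2 [B3 _]]].
           unfold noncollision. repeat split; intros E; [rewrite E in B1| rewrite E in B3| rewrite E in B2];
             rewrite Rminus_diag, Rabs_R0 in *; lra.
        -- apply Hzd'. lra.
  - intros t Ht. unfold ext. destruct (Rlt_dec t t1); [repeat split; reflexivity| lra].
Qed.
Lemma rev_sol m1 m2 m3 W q1 q2 q3 p1 p2 p3 ta tb :
  is_solution m1 m2 m3 W q1 q2 q3 p1 p2 p3 ta tb ->
  is_solution m1 m2 m3 W (fun t => q1 (- t)) (fun t => q2 (- t)) (fun t => q3 (- t))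
    (fun t => - p1 (- t)) (fun t => - p2 (- t)) (fun t => - p3 (- t)) (- tb) (- ta).
Proof.
  intros Hs t Ht.
  destruct (Hs (- t) ltac:(lra)) as [Hnc [D1 [D2 [D3 [[v1 [V1 W1]] [[v2 [V2 W2]] [v3 [V3 W3]]]]]]]].
  split; [exact Hnc|]. split; [|split; [|split; [|split; [|split]]]].
  - replace (- p1 (- t) / m1) with (- (p1 (- t) / m1)) by (unfold Rdiv; ring). apply dlim_rev; auto.
  - replace (- p2 (- t) / m2) with (- (p2 (- t) / m2)) by (unfold Rdiv; ring). apply dlim_rev; auto.
  - replace (- p3 (- t) / m3) with (- (p3 (- t) / m3)) by (unfold Rdiv; ring). apply dlim_rev; auto.
  - exists v1. split; auto. apply dlim_rev2; auto.
  - exists v2. split; auto. apply dlim_rev2; auto.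
  - exists v3. split; auto. apply dlim_rev2; auto.
Qed.

Theorem mainTheorem1 :
  forall (m1 m2 m3 al12 al13 al23 be12 be13 be23 a b : R),
    0 < m1 -> 0 < m2 -> 0 < m3 ->
    0 < al12 -> 0 < al13 -> 0 < al23 ->
    0 < be12 -> 0 < be13 -> 0 < be23 ->
    4 < a -> a < b - 1 ->
    forall (q1 q2 q3 p1 p2 p3 : R -> R) (t0 t1 : R),
      t0 < t1 ->
      is_solution m1 m2 m3 (Wpot al12 al13 al23 a be12 be13 be23 b)
        q1 q2 q3 p1 p2 p3 t0 t1 ->
      (* forward: no solution on a bounded interval is maximal at t1 *)
      (exists d, 0 < d /\
         exists q1' q2' q3' p1' p2' p3' : R -> R,
           is_solution m1 m2 m3 (Wpot al12 al13 al23 a be12 be13 be23 b)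
             q1' q2' q3' p1' p2' p3' t0 (t1 + d) /\
           agree_on q1 q2 q3 p1 p2 p3 q1' q2' q3' p1' p2' p3' t0 t1) /\
      (* backward: likewise at t0 *)
      (exists d, 0 < d /\
         exists q1' q2' q3' p1' p2' p3' : R -> R,
           is_solution m1 m2 m3 (Wpot al12 al13 al23 a be12 be13 be23 b)
             q1' q2' q3' p1' p2' p3' (t0 - d) t1 /\
           agree_on q1 q2 q3 p1 p2 p3 q1' q2' q3' p1' p2' p3' t0 t1).
Proof.
  intros m1 m2 m3 al12 al13 al23 be12 be13 be23 a b Hm1 Hm2 Hm3 Ha12 Ha13 Ha23 Hb12 Hb13 Hb23 Ha Hab
    q1 q2 q3 p1 p2 p3 t0 t1 Ht01 Hs.
  assert (Hab' : 0 < a < b) by lra.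
  split.
  - apply forward; auto.
  - pose proof (rev_sol _ _ _ _ _ _ _ _ _ _ _ _ Hs) as Hr.
    assert (Hlt : - t1 < - t0) by lra.
    destruct (forward _ _ _ _ _ _ _ _ _ _ _ _ _ _ _ _ _ _ _ Hm1 Hm2 Hm3 Ha12 Ha13 Ha23 Hb12 Hb13 Hb23 Hab'
                Hlt Hr) as [d [Hd [Q1 [Q2 [Q3 [P1 [P2 [P3 [HQ HA]]]]]]]]].
    exists d. split; auto.
    exists (fun t => Q1 (- t)), (fun t => Q2 (- t)), (fun t => Q3 (- t)),
           (fun t => - P1 (- t)), (fun t => - P2 (- t)), (fun t => - P3 (- t)).
    split.
    + pose proof (rev_sol _ _ _ _ _ _ _ _ _ _ _ _ HQ) as HQ'.
      intros t Ht. apply HQ'. lra.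
    + intros t Ht. destruct (HA (- t) ltac:(lra)) as [E1 [E2 [E3 [E4 [E5 E6]]]]].
      rewrite Ropp_involutive in E1, E2, E3, E4, E5, E6.
      cbv beta. rewrite E1, E2, E3, E4, E5, E6. repeat split; ring.
Qed.
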